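(* Let $n\in\mathbb{N}$, $a,b\in\mathbb{C}$ with $b\notin\mathbb{Z}^-$, and let $c\in\mathbb{C}$. (i) If $c\neq0$, then \[ \frac{1}{n+b+1}\sum_{j=0}^{n}\sum_{i=0}^{j}\frac{\binom{n+a+1}{i}}{\binom{n+b}{j}}\,c^{i-j} =\frac{1}{b+1}\sum_{k=0}^{n}\sum_{j=0}^{k}\frac{\binom{k+a}{j}}{\binom{k+b+1}{k}}\,c^{j-k}. \] (ii) If $|c+1|>1$, $a-b\notin\{0,-1,-2,\dots\}$ and $a\notin\mathbb{Z}^-$, then \[ \frac{(a-b)(c+1)}{(n+b+1)c}\sum_{j=0}^{n}\sum_{i=0}^{j}\frac{\binom{n+a+1}{i}}{\binom{n+b}{j}}\,c^{i-j} =\frac{(a+1)_{n+1}}{(b+1)_{n+1}}\;{}_3F_2\!\left(1,a-b,n+a+2;\,a-b+1,a+1;\,\tfrac{1}{c+1}\right)-{}_2F_1\!\left(1,a-b;\,a-b+1;\,\tfrac{1}{c+1}\right). \] (iii) If $|c+1|>1$ and $a=b-m$ with $m\in\mathbb{N}$, then \[ \frac{(c+1)^{b-a+1}}{(n+b+1)c}\sum_{j=0}^{n}\sum_{i=0}^{j}\frac{\binom{n+a+1}{i}}{\binom{n+b}{j}}\,c^{i-j} =\frac{n+b+2}{(b+1)(c+1)}\,{}_3F_2\!\left(1,1,n+b+3;\,2,b+2;\,\tfrac{1}{c+1}\right)+\psi(n+b+2)-\psi(b+1)+\log\frac{c}{c+1}-\sum_{\ell=1}^{b-a}\frac{(c+1)^{\ell}}{\ell}\left(\frac{(b+1-\ell)_{n+1}}{(b+1)_{n+1}}-1\right).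 \]
   Context: For $x\in\mathbb{C}$, $i\in\mathbb{N}$: $\binom{x}{i}=x(x-1)\cdots(x-i+1)/i!$. $\mathbb{Z}^-=\{-1,-2,\dots\}$. Pochhammer symbol: $(\alpha)_0=1$, $(\alpha)_k=\alpha(\alpha+1)\cdots(\alpha+k-1)$. Hypergeometric functions: ${}_2F_1(a,b;c;z)=\sum_{k\ge0}\frac{(a)_k(b)_k}{(c)_k}\frac{z^k}{k!}$ and ${}_3F_2(a,b,c;d,e;z)=\sum_{k\ge0}\frac{(a)_k(b)_k(c)_k}{(d)_k(e)_k}\frac{z^k}{k!}$, convergent for $|z|<1$. $\psi=\Gamma'/\Gamma$ is the digamma function (so $\psi(n+b+2)-\psi(b+1)=\sum_{k=1}^{n+1}\frac{1}{b+k}$), and $\log$ is the principal branch. (The paper asserts (ii),(iii) for all $c\notin\{-1,0\}$ with the hypergeometric functions understood by analytic continuation; here they are stated in the region $|c+1|>1$ where the series converge.) *)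

(* Defs.v *)
From Stdlib Require Import Reals Lra Arith ClassicalEpsilon.
Open Scope R_scope.

Record Cx : Type := mkC { Re : R ; Im : R }.

Declare Scope C_scope.
Delimit Scope C_scope with Cx.
Bind Scope C_scope with Cx.

Definition RtoC (x : R) : Cx := mkC x 0.
Coercion RtoC : R >-> Cx.
Definition Ci : Cx := mkC 0 1.

Definition Cadd (z w : Cx) : Cx := mkC (Re z + Re w) (Im z + Im w).
Definition Copp (z : Cx) : Cx := mkC (- Re z) (- Im z).
Definition Csub (z w : Cx) : Cx := Cadd z (Copp w).
Definition Cmul (z w : Cx) : Cx :=
  mkC (Re z * Re w - Im z * Im w) (Re z * Im w + Im z * Re w).
Definition Cinv (z : Cx) : Cx :=
  let d := Re z * Re z + Im z * Im z in mkC (Re z / d) (- Im z / d).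
Definition Cdiv (z w : Cx) : Cx := Cmul z (Cinv w).
Fixpoint Cpow (z : Cx) (n : nat) : Cx :=
  match n with O => RtoC 1 | S k => Cmul (Cpow z k) z end.
Definition Cnorm (z : Cx) : R := sqrt (Re z * Re z + Im z * Im z).
Definition CofNat (n : nat) : Cx := RtoC (INR n).

Infix "+" := Cadd : C_scope.
Infix "-" := Csub : C_scope.
Notation "- x" := (Copp x) : C_scope.
Infix "*" := Cmul : C_scope.
Infix "/" := Cdiv : C_scope.
Infix "^" := Cpow : C_scope.

Fixpoint Csum (n : nat) (f : nat -> Cx) : Cx :=
  match n with O => RtoC 0 | S k => Cadd (Csum k f) (f k) end.

Fixpoint Cfall (x : Cx) (i : nat) : Cx :=
  match i with O => RtoC 1 | S k => Cmul (Cfall x k) (Csub x (CofNat k)) end.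
Definition Cbinom (x : Cx) (i : nat) : Cx := Cdiv (Cfall x i) (CofNat (fact i)).

Fixpoint Cpoch (a : Cx) (k : nat) : Cx :=
  match k with O => RtoC 1 | S j => Cmul (Cpoch a j) (Cadd a (CofNat j)) end.

Definition Cseries_cv (u : nat -> Cx) (l : Cx) : Prop :=
  Un_cv (fun N => Re (Csum N u)) (Re l) /\ Un_cv (fun N => Im (Csum N u)) (Im l).

Definition Cseries_value (u : nat -> Cx) : Cx :=
  epsilon (inhabits (RtoC 0)) (fun l => Cseries_cv u l).

Definition F21 (a b c z : Cx) : Cx :=
  Cseries_value (fun k =>
    Cdiv (Cmul (Cmul (Cpoch a k) (Cpoch b k)) (Cpow z k))
         (Cmul (Cpoch c k) (CofNat (fact k)))).

Definition F32 (a b c d e z : Cx) : Cx :=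
  Cseries_value (fun k =>
    Cdiv (Cmul (Cmul (Cmul (Cpoch a k) (Cpoch b k)) (Cpoch c k)) (Cpow z k))
         (Cmul (Cmul (Cpoch d k) (Cpoch e k)) (CofNat (fact k)))).

(* principal argument in (-pi, pi] and principal logarithm *)
Definition Carg (z : Cx) : R :=
  let x := Re z in let y := Im z in
  if Rlt_dec 0 x then atan (y / x)
  else if Rlt_dec x 0 then
    (if Rle_dec 0 y then atan (y / x) + PI else atan (y / x) - PI)
  else if Rlt_dec 0 y then PI / 2
  else if Rlt_dec y 0 then - (PI / 2)
  else 0.
Definition Clog (z : Cx) : Cx := mkC (ln (Cnorm z)) (Carg z).

Definition EulerGamma : R :=
  epsilon (inhabits 0)
    (fun g => Un_cv (fun n => sum_f_R0 (fun k => / INR (S k)) n - ln (INR (S n))) g).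
Definition Cdigamma (z : Cx) : Cx :=
  Cadd (RtoC (- EulerGamma))
       (Cseries_value (fun k =>
          Csub (Cinv (CofNat (S k))) (Cinv (Cadd (CofNat k) z)))).

Definition Sdouble (n : nat) (a b c : Cx) : Cx :=
  Csum (S n) (fun j => Csum (S j) (fun i =>
    Cmul (Cdiv (Cbinom (Cadd (CofNat (S n)) a) i) (Cbinom (Cadd (CofNat n) b) j))
         (Cdiv (Cpow c i) (Cpow c j)))).

(* Main.v *)
Require Import Defs.
From Stdlib Require Import Reals Lra Arith Lia Field ClassicalEpsilon.
From Coquelicot Require Import Rcomplements Rbar Hierarchy Lim_seq Series PSeries Derive Continuity AutoDerive Lub.
Open Scope C_scope.


Open Scope C_scope.

Lemma Cx_ext (z w : Cx) : Re z = Re w -> Im z = Im w -> z = w.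
Proof. destruct z, w; simpl; intros; subst; reflexivity. Qed.

Lemma Cx_ring : ring_theory (RtoC 0) (RtoC 1) Cadd Cmul Csub Copp (@eq Cx).
Proof.
  constructor; intros; apply Cx_ext; simpl; ring.
Qed.

Lemma Cx_one_neq_zero : RtoC 1 <> RtoC 0.
Proof. intro H. injection H. lra. Qed.

Lemma Cx_field : field_theory (RtoC 0) (RtoC 1) Cadd Cmul Csub Copp Cdiv Cinv (@eq Cx).
Proof.
  constructor.
  - exact Cx_ring.
  - exact Cx_one_neq_zero.
  - reflexivity.
  - intros p Hp. destruct p as [x y].
    assert (Hd : (x * x + y * y <> 0)%R).
    { intro H. apply Hp. pose proof (Rle_0_sqr x). pose proof (Rle_0_sqr y). unfold Rsqr in *.
      assert (x * x = 0)%R by lra. assert (y * y = 0)%R by lra.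
      apply Rmult_integral in H2. apply Rmult_integral in H3.
      assert (x = 0)%R by tauto. assert (y = 0)%R by tauto. subst. reflexivity. }
    apply Cx_ext; unfold Cinv, Cmul; simpl; field; exact Hd.
Qed.

Add Field Cxfield : Cx_field.

Lemma RtoC_add (x y : R) : RtoC (x + y) = RtoC x + RtoC y.
Proof. apply Cx_ext; simpl; ring. Qed.
Lemma RtoC_mul (x y : R) : RtoC (x * y) = RtoC x * RtoC y.
Proof. apply Cx_ext; simpl; ring. Qed.
Lemma RtoC_sub (x y : R) : RtoC (x - y) = RtoC x - RtoC y.
Proof. apply Cx_ext; simpl; ring. Qed.
Lemma RtoC_opp (x : R) : RtoC (- x) = - RtoC x.
Proof. apply Cx_ext; simpl; ring. Qed.
Lemma RtoC_inj (x y : R) : RtoC x = RtoC y -> x = y.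
Proof. intro H; injection H; auto. Qed.
Lemma RtoC_neq (x y : R) : x <> y -> RtoC x <> RtoC y.
Proof. intros H H'; apply H, RtoC_inj, H'. Qed.

Lemma CofNat_S (k : nat) : CofNat (S k) = CofNat k + RtoC 1.
Proof. unfold CofNat. rewrite S_INR. apply RtoC_add. Qed.
Lemma CofNat_0 : CofNat 0 = RtoC 0.
Proof. reflexivity. Qed.
Lemma CofNat_add (p q : nat) : CofNat (p + q) = CofNat p + CofNat q.
Proof. unfold CofNat. rewrite plus_INR. apply RtoC_add. Qed.
Lemma CofNat_mul (p q : nat) : CofNat (p * q) = CofNat p * CofNat q.
Proof. unfold CofNat. rewrite mult_INR. apply RtoC_mul. Qed.
Lemma CofNat_neq0 (k : nat) : CofNat (S k) <> RtoC 0.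
Proof. unfold CofNat. apply RtoC_neq. apply not_0_INR. lia. Qed.
Lemma CofNat_fact_neq0 (k : nat) : CofNat (fact k) <> RtoC 0.
Proof. unfold CofNat. apply RtoC_neq. apply INR_fact_neq_0. Qed.

Lemma Csum_ext (n : nat) (f g : nat -> Cx) :
  (forall k, (k < n)%nat -> f k = g k) -> Csum n f = Csum n g.
Proof.
  induction n; intros H; simpl; auto.
  rewrite IHn by (intros; apply H; lia). rewrite H by lia. reflexivity.
Qed.
Lemma Csum_add (n : nat) (f g : nat -> Cx) :
  Csum n (fun k => f k + g k) = Csum n f + Csum n g.
Proof. induction n; simpl. ring. rewrite IHn. ring. Qed.
Lemma Csum_sub (n : nat) (f g : nat -> Cx) :
  Csum n (fun k => f k - g k) = Csum n f - Csum n g.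
Proof. induction n; simpl. ring. rewrite IHn. ring. Qed.
Lemma Csum_scal (n : nat) (c : Cx) (f : nat -> Cx) :
  Csum n (fun k => c * f k) = c * Csum n f.
Proof. induction n; simpl. ring. rewrite IHn. ring. Qed.
Lemma Csum_zero (n : nat) (f : nat -> Cx) :
  (forall k, (k < n)%nat -> f k = RtoC 0) -> Csum n f = RtoC 0.
Proof.
  induction n; intros H; simpl; auto.
  rewrite IHn by (intros; apply H; lia). rewrite H by lia. ring.
Qed.
Lemma Csum_shift (n : nat) (f : nat -> Cx) :
  Csum (S n) f = f 0%nat + Csum n (fun k => f (S k)).
Proof. induction n; simpl in *. ring. rewrite IHn. ring. Qed.
Lemma Csum_split (p q : nat) (f : nat -> Cx) :
  Csum (p + q) f = Csum p f + Csum q (fun k => f (p + k)%nat).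
Proof.
  induction q; simpl. rewrite Nat.add_0_r. ring.
  rewrite Nat.add_succ_r. simpl. rewrite IHq. ring.
Qed.
Lemma Csum_rev (n : nat) (f : nat -> Cx) :
  Csum n f = Csum n (fun k => f (n - 1 - k)%nat).
Proof.
  induction n; [reflexivity|].
  rewrite (Csum_shift n (fun k => f (S n - 1 - k)%nat)).
  replace (S n - 1 - 0)%nat with n by lia.
  rewrite (Csum_ext n (fun k => f (S n - 1 - S k)%nat) (fun k => f (n - 1 - k)%nat)).
  rewrite <- IHn. simpl. ring. intros; f_equal; lia.
Qed.
Lemma Csum_swap (n m : nat) (f : nat -> nat -> Cx) :
  Csum n (fun i => Csum m (fun j => f i j)) = Csum m (fun j => Csum n (fun i => f i j)).
Proof.
  induction n; simpl.
  - symmetry; apply Csum_zero; auto.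
  - rewrite IHn. rewrite <- Csum_add. reflexivity.
Qed.
Lemma Csum_tri (n : nat) (f : nat -> nat -> Cx) :
  Csum n (fun j => Csum (S j) (fun m => f j m))
  = Csum n (fun m => Csum n (fun j => if (m <=? j)%nat then f j m else RtoC 0)).
Proof.
  rewrite <- Csum_swap. apply Csum_ext. intros j Hj.
  replace n with (S j + (n - S j))%nat by lia.
  rewrite Csum_split.
  rewrite (Csum_zero (n - S j)).
  2:{ intros k Hk. replace (S j + k <=? j)%nat with false. reflexivity. symmetry; apply Nat.leb_gt; lia. }
  rewrite Cx_ring.(Radd_comm), Cx_ring.(Radd_0_l).
  apply Csum_ext. intros k Hk. replace (k <=? j)%nat with true. reflexivity. symmetry; apply Nat.leb_le; lia.
Qed.

Lemma Cx_eq_dec (z w : Cx) : {z = w} + {z <> w}.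
Proof.
  destruct z as [x y], w as [x' y'].
  destruct (Req_dec_T x x'); destruct (Req_dec_T y y'); subst; auto;
  right; intro H; injection H; auto.
Qed.


Open Scope C_scope.

Lemma Cpow_add (c : Cx) (p q : nat) : c ^ (p + q) = c ^ p * c ^ q.
Proof. induction q; simpl. rewrite Nat.add_0_r. ring. rewrite Nat.add_succ_r; simpl. rewrite IHq. ring. Qed.
Lemma Cpow_neq0 (c : Cx) (k : nat) : c <> RtoC 0 -> c ^ k <> RtoC 0.
Proof.
  intros Hc; induction k; simpl. apply Cx_one_neq_zero.
  intro H. assert (H' : (c ^ k * c) * (Cinv (c ^ k) * Cinv c) = RtoC 0) by (rewrite H; ring).
  replace ((c ^ k * c) * (Cinv (c ^ k) * Cinv c)) with (RtoC 1) in H' by (field; auto).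
  apply Cx_one_neq_zero; exact H'.
Qed.
Lemma Cpow_mul (c d : Cx) (k : nat) : (c * d) ^ k = c ^ k * d ^ k.
Proof. induction k; simpl. ring. rewrite IHk. ring. Qed.
Lemma Cpow_inv (c : Cx) (k : nat) : c <> RtoC 0 -> (RtoC 1 / c) ^ k = RtoC 1 / c ^ k.
Proof.
  intros Hc; induction k; simpl.
  - field. apply Cx_one_neq_zero.
  - rewrite IHk. field. split; auto. apply Cpow_neq0; auto.
Qed.
Lemma Cpow_ratio (c : Cx) (i j : nat) : c <> RtoC 0 -> (i <= j)%nat ->
  c ^ i / c ^ j = (RtoC 1 / c) ^ (j - i).
Proof.
  intros Hc Hij. rewrite Cpow_inv by auto.
  replace j with (i + (j - i))%nat at 1 by lia. rewrite Cpow_add.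
  field. split; apply Cpow_neq0; auto.
Qed.

Lemma Cfall_shift (x : Cx) (j : nat) : Cfall (x + RtoC 1) (S j) = (x + RtoC 1) * Cfall x j.
Proof.
  induction j. simpl. unfold CofNat; simpl. apply Cx_ext; simpl; ring.
  change (Cfall (x + RtoC 1) (S (S j))) with (Cfall (x + RtoC 1) (S j) * (x + RtoC 1 - CofNat (S j))).
  rewrite IHj. simpl. rewrite CofNat_S. ring.
Qed.

Lemma fact_S_C (j : nat) : CofNat (fact (S j)) = CofNat (S j) * CofNat (fact j).
Proof. rewrite <- CofNat_mul. reflexivity. Qed.

Lemma Cbinom_0 (x : Cx) : Cbinom x 0 = RtoC 1.
Proof. unfold Cbinom. simpl. unfold CofNat. simpl. field. apply Cx_one_neq_zero. Qed.

Lemma Cbinom_pascal (x : Cx) (j : nat) :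
  Cbinom (x + RtoC 1) (S j) = Cbinom x (S j) + Cbinom x j.
Proof.
  unfold Cbinom. rewrite Cfall_shift. rewrite fact_S_C. simpl.
  rewrite CofNat_S. field. split. apply CofNat_fact_neq0.
  rewrite <- CofNat_S. apply CofNat_neq0.
Qed.

Lemma Cfall_nat_zero (K m : nat) : (K < m)%nat -> Cfall (CofNat K) m = RtoC 0.
Proof.
  intros H. induction m. lia.
  destruct (Nat.eq_dec K m).
  - subst. simpl. unfold Csub. ring_simplify. apply Cx_ext; simpl; ring.
  - simpl. rewrite IHm by lia. ring.
Qed.
Lemma Cbinom_nat_zero (K m : nat) : (K < m)%nat -> Cbinom (CofNat K) m = RtoC 0.
Proof. intros H; unfold Cbinom; rewrite Cfall_nat_zero by auto. field. apply CofNat_fact_neq0. Qed.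

Lemma Cfall_nat_self (K : nat) : Cfall (CofNat K) K = CofNat (fact K).
Proof.
  induction K. reflexivity.
  rewrite CofNat_S. rewrite Cfall_shift. rewrite IHK. rewrite fact_S_C. rewrite CofNat_S. ring.
Qed.
Lemma Cbinom_nat_self (K : nat) : Cbinom (CofNat K) K = RtoC 1.
Proof. unfold Cbinom; rewrite Cfall_nat_self. field. apply CofNat_fact_neq0. Qed.

Lemma vandermonde (K : nat) : forall (x : Cx) (j : nat),
  Csum (S j) (fun m => Cbinom x (j - m) * Cbinom (CofNat K) m) = Cbinom (x + CofNat K) j.
Proof.
  induction K; intros x j.
  - rewrite Csum_shift. rewrite Csum_zero.
    + rewrite Nat.sub_0_r. rewrite Cbinom_0. rewrite CofNat_0. replace (x + RtoC 0) with x by ring. ring.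
    + intros k Hk. rewrite Cbinom_nat_zero by lia. ring.
  - rewrite Csum_shift. rewrite Nat.sub_0_r, Cbinom_0.
    rewrite (Csum_ext j _ (fun k => Cbinom x (j - S k) * Cbinom (CofNat K) (S k)
                          + Cbinom x (j - S k) * Cbinom (CofNat K) k)).
    2:{ intros k Hk. rewrite CofNat_S, Cbinom_pascal. ring. }
    rewrite Csum_add.
    assert (E1 : Cbinom x j * RtoC 1 + Csum j (fun k => Cbinom x (j - S k) * Cbinom (CofNat K) (S k))
                 = Cbinom (x + CofNat K) j).
    { rewrite <- IHK. rewrite (Csum_shift j). rewrite Nat.sub_0_r, Cbinom_0. reflexivity. }
    destruct j as [|j].
    + simpl. rewrite !Cbinom_0. ring.
    + assert (E2 : Csum (S j) (fun k => Cbinom x (S j - S k) * Cbinom (CofNat K) k) = Cbinom (x + CofNat K) j).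
      { rewrite <- IHK. apply Csum_ext. intros k Hk. replace (S j - S k)%nat with (j - k)%nat by lia. reflexivity. }
      rewrite E2.
      replace (x + CofNat (S K)) with ((x + CofNat K) + RtoC 1) by (rewrite CofNat_S; ring).
      rewrite Cbinom_pascal. rewrite <- E1. ring.
Qed.

Lemma Cpoch_add (a : Cx) (p q : nat) : Cpoch a (p + q) = Cpoch a p * Cpoch (a + CofNat p) q.
Proof.
  induction q; simpl. rewrite Nat.add_0_r. ring.
  rewrite Nat.add_succ_r. simpl. rewrite IHq. rewrite CofNat_add. ring.
Qed.
Lemma Cpoch_cons (a : Cx) (q : nat) : Cpoch a (S q) = a * Cpoch (a + RtoC 1) q.
Proof.
  change (S q) with (1 + q)%nat. rewrite Cpoch_add. simpl. unfold CofNat. simpl.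
  replace (RtoC 1 * (a + RtoC 0)) with a by (apply Cx_ext; simpl; ring).
  replace (RtoC (0 + 1)) with (RtoC 1) by (f_equal; ring). reflexivity.
Qed.
Lemma Cfall_poch (z : Cx) (q : nat) : Cfall z q = Cpoch (z - CofNat q + RtoC 1) q.
Proof.
  induction q. reflexivity.
  simpl Cfall. rewrite IHq. rewrite Cpoch_cons.
  replace (z - CofNat (S q) + RtoC 1 + RtoC 1) with (z - CofNat q + RtoC 1) by (rewrite CofNat_S; ring).
  rewrite CofNat_S. ring.
Qed.
Lemma Cpoch_neq0 (a : Cx) (q : nat) : (forall i, (i < q)%nat -> a + CofNat i <> RtoC 0) -> Cpoch a q <> RtoC 0.
Proof.
  induction q; intros H; simpl. apply Cx_one_neq_zero.
  intro E. assert (E' : Cpoch a q * (a + CofNat q) * (Cinv (Cpoch a q) * Cinv (a + CofNat q)) = RtoC 0) by (rewrite E; ring).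
  replace (Cpoch a q * (a + CofNat q) * (Cinv (Cpoch a q) * Cinv (a + CofNat q))) with (RtoC 1) in E'.
  apply Cx_one_neq_zero; auto. field. split. apply H; lia. apply IHq. intros; apply H; lia.
Qed.

Lemma Csum_telescope (N : nat) (u : nat -> Cx) :
  Csum N (fun k => u (S k) - u k) = u N - u 0%nat.
Proof. induction N; simpl. ring. rewrite IHN. ring. Qed.

Definition Rform (n : nat) (x y : Cx) : Cx :=
  Csum (S n) (fun k => Cpoch x k * Cpoch (y + CofNat (S k)) (n - k)).
Definition Lform (n : nat) (x y : Cx) : Cx :=
  Csum (S n) (fun j => Cpoch (x + CofNat (S n - j)) j * Cpoch y (n - j)).

Lemma Rform_tele (n : nat) (x y : Cx) :
  (x - y) * Rform n x y = Cpoch x (S n) - Cpoch y (S n).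
Proof.
  unfold Rform. rewrite <- Csum_scal.
  set (u := fun k => Cpoch x k * Cpoch (y + CofNat k) (S n - k)).
  rewrite (Csum_ext (S n) _ (fun k => u (S k) - u k)).
  - rewrite Csum_telescope. unfold u. rewrite Nat.sub_diag. simpl Cpoch at 2.
    rewrite Nat.sub_0_r. rewrite CofNat_0. replace (y + RtoC 0) with y by ring.
    change (Cpoch x 0) with (RtoC 1). ring.
  - intros k Hk. unfold u. replace (S n - k)%nat with (S (n - k)) by lia.
    replace (S n - S k)%nat with (n - k)%nat by lia.
    rewrite (Cpoch_cons (y + CofNat k)). change (Cpoch x (S k)) with (Cpoch x k * (x + CofNat k)).
    replace (y + CofNat k + RtoC 1) with (y + CofNat (S k)) by (rewrite CofNat_S; ring).
    ring.
Qed.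

Lemma Lform_Rform (n : nat) (x y : Cx) : Lform n x y = Rform n y x.
Proof.
  unfold Lform, Rform. rewrite (Csum_rev (S n)).
  apply Csum_ext. intros k Hk.
  replace (S n - 1 - k)%nat with (n - k)%nat by lia.
  replace (S n - (n - k))%nat with (S k) by lia.
  replace (n - (n - k))%nat with k by lia. ring.
Qed.

Lemma Lform_eq_Rform (n : nat) (x y : Cx) : Lform n x y = Rform n x y.
Proof.
  rewrite Lform_Rform.
  destruct (Cx_eq_dec x y) as [E|E].
  - subst; reflexivity.
  - assert (H1 := Rform_tele n x y). assert (H2 := Rform_tele n y x).
    assert (Hxy : x - y <> RtoC 0).
    { intro H. apply E. replace x with ((x - y) + y) by ring. rewrite H. ring. }
    assert (Hyx : y - x <> RtoC 0).
    { intro H. apply Hxy. replace (x - y) with (- (y - x)) by ring. rewrite H. ring. }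
    apply (f_equal (fun t => t / (x - y))) in H1.
    apply (f_equal (fun t => t / (y - x))) in H2.
    replace ((x - y) * Rform n x y / (x - y)) with (Rform n x y) in H1 by (field; auto).
    replace ((y - x) * Rform n y x / (y - x)) with (Rform n y x) in H2 by (field; auto).
    rewrite H1, H2. field. auto.
Qed.


Open Scope C_scope.

Definition Xc (N : nat) (g : nat -> nat -> Cx) (m : nat) : Cx :=
  Csum N (fun j => if (m <=? j)%nat then g j (j - m)%nat else RtoC 0).

Lemma Csum_if_scal (N m : nat) (h : nat -> Cx) (w : Cx) :
  Csum N (fun j => if (m <=? j)%nat then h j * w else RtoC 0)
  = Csum N (fun j => if (m <=? j)%nat then h j else RtoC 0) * w.
Proof.
  rewrite Cx_ring.(Rmul_comm). rewrite <- Csum_scal. apply Csum_ext. intros k Hk.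
  destruct (m <=? k)%nat; ring.
Qed.

Lemma double_to_poly (N : nat) (g : nat -> nat -> Cx) (c : Cx) : c <> RtoC 0 ->
  Csum N (fun j => Csum (S j) (fun i => g j i * (c ^ i / c ^ j)))
  = Csum N (fun m => Xc N g m * (RtoC 1 / c) ^ m).
Proof.
  intros Hc.
  rewrite (Csum_ext N _ (fun j => Csum (S j) (fun m => g j (j - m)%nat * (RtoC 1 / c) ^ m))).
  - rewrite Csum_tri. apply Csum_ext. intros m Hm. unfold Xc.
    rewrite <- Csum_if_scal. reflexivity.
  - intros j Hj. rewrite Csum_rev. apply Csum_ext. intros i Hi.
    replace (S j - 1 - i)%nat with (j - i)%nat by lia.
    rewrite Cpow_ratio by (auto; lia). replace (j - (j - i))%nat with i by lia. reflexivity.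
Qed.

Lemma transform (N : nat) (g : nat -> nat -> Cx) (K : nat) :
  Csum N (fun m => Xc N g m * Cbinom (CofNat K) m)
  = Csum N (fun j => Csum (S j) (fun m => g j (j - m)%nat * Cbinom (CofNat K) m)).
Proof.
  rewrite Csum_tri. apply Csum_ext. intros m Hm. unfold Xc.
  rewrite <- Csum_if_scal. reflexivity.
Qed.

Lemma binom_inversion (N : nat) (D : nat -> Cx) :
  (forall K, (K < N)%nat -> Csum N (fun m => D m * Cbinom (CofNat K) m) = RtoC 0) ->
  forall m, (m < N)%nat -> D m = RtoC 0.
Proof.
  intros H m. induction m as [m IH] using lt_wf_ind. intros Hm.
  specialize (H m Hm).
  replace N with (m + (1 + (N - m - 1)))%nat in H by lia.
  rewrite Csum_split in H. rewrite Csum_split in H.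
  rewrite Csum_zero in H by (intros k Hk; rewrite IH by lia; ring).
  rewrite (Csum_zero (N - m - 1)) in H.
  2:{ intros k Hk. rewrite Cbinom_nat_zero by lia. ring. }
  simpl in H. rewrite Nat.add_0_r, Cbinom_nat_self in H.
  replace (D m) with (RtoC 0 + (RtoC 0 + D m * RtoC 1 + RtoC 0)) by ring. exact H.
Qed.

Lemma CofNat_sub (p q : nat) : (q <= p)%nat -> CofNat (p - q) = CofNat p - CofNat q.
Proof.
  intros H. replace (CofNat p) with (CofNat ((p - q) + q)) by (f_equal; lia).
  rewrite CofNat_add. ring.
Qed.

Section Core.
Variable (n : nat) (a b : Cx).
Hypothesis Hb : forall k : nat, b <> - CofNat (S k).

Lemma yk_neq0 (i : nat) : b + RtoC 1 + CofNat i <> RtoC 0.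
Proof.
  intro H. apply (Hb i). replace b with (b + RtoC 1 + CofNat i - CofNat (S i)) by (rewrite CofNat_S; ring).
  rewrite H. ring.
Qed.
Lemma poch_y_neq0 (i q : nat) : Cpoch (b + RtoC 1 + CofNat i) q <> RtoC 0.
Proof.
  apply Cpoch_neq0. intros t Ht. replace (b + RtoC 1 + CofNat i + CofNat t) with (b + RtoC 1 + CofNat (i + t)).
  apply yk_neq0. rewrite CofNat_add. ring.
Qed.
Lemma poch_y0_neq0 (q : nat) : Cpoch (b + RtoC 1) q <> RtoC 0.
Proof.
  replace (b + RtoC 1) with (b + RtoC 1 + CofNat 0) by (rewrite CofNat_0; ring). apply poch_y_neq0.
Qed.

Definition T1 (K : nat) : Cx :=
  Csum (S n) (fun j => Cbinom (CofNat (S n) + a + CofNat K) j / Cbinom (CofNat n + b) j).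
Definition T2 (K : nat) : Cx :=
  Csum (S n) (fun k => Cbinom (CofNat k + a + CofNat K) k / Cbinom (CofNat (S k) + b) k).

Lemma Core1 (K : nat) :
  T1 K * Cpoch (b + RtoC 1) (S n)
  = (CofNat (S n) + b) * Lform n (a + CofNat K + RtoC 1) (b + RtoC 1).
Proof.
  unfold T1, Lform. rewrite Cx_ring.(Rmul_comm). rewrite <- !Csum_scal. apply Csum_ext.
  intros j Hj. unfold Cbinom. rewrite !Cfall_poch.
  replace (CofNat (S n) + a + CofNat K - CofNat j + RtoC 1) with (a + CofNat K + RtoC 1 + CofNat (S n - j)).
  2:{ rewrite CofNat_sub by lia. rewrite CofNat_S. ring. }
  replace (CofNat n + b - CofNat j + RtoC 1) with (b + RtoC 1 + CofNat (n - j)).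
  2:{ rewrite CofNat_sub by lia. ring. }
  replace (S n) with ((n - j) + S j)%nat at 1 by lia.
  rewrite Cpoch_add. simpl (Cpoch (b + RtoC 1 + CofNat (n - j)) (S j)).
  replace (b + RtoC 1 + CofNat (n - j) + CofNat j) with (CofNat (S n) + b).
  2:{ replace (CofNat (S n)) with (CofNat ((n - j) + j) + RtoC 1). rewrite CofNat_add; ring.
      rewrite CofNat_S. f_equal. f_equal. lia. }
  field. split. apply CofNat_fact_neq0. apply poch_y_neq0.
Qed.

Lemma Core2 (K : nat) :
  T2 K * Cpoch (b + RtoC 1) (S n)
  = (b + RtoC 1) * Rform n (a + CofNat K + RtoC 1) (b + RtoC 1).
Proof.
  unfold T2, Rform. rewrite Cx_ring.(Rmul_comm). rewrite <- !Csum_scal. apply Csum_ext.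
  intros k Hk. unfold Cbinom. rewrite !Cfall_poch.
  replace (CofNat k + a + CofNat K - CofNat k + RtoC 1) with (a + CofNat K + RtoC 1) by ring.
  replace (CofNat (S k) + b - CofNat k + RtoC 1) with (b + RtoC 1 + RtoC 1) by (rewrite CofNat_S; ring).
  replace (S n) with (S k + (n - k))%nat at 1 by lia.
  rewrite Cpoch_add. rewrite Cpoch_cons.
  replace (b + RtoC 1 + CofNat (S k)) with (b + RtoC 1 + CofNat (S k)) by reflexivity.
  field. split. apply CofNat_fact_neq0.
  replace (b + RtoC 1 + RtoC 1) with (b + RtoC 1 + CofNat 1) by (unfold CofNat; simpl; apply Cx_ext; simpl; ring).
  apply poch_y_neq0.
Qed.

Lemma Core (K : nat) :
  T1 K / (CofNat (S n) + b) = T2 K / (b + RtoC 1).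
Proof.
  assert (H1 := Core1 K). assert (H2 := Core2 K).
  rewrite Lform_eq_Rform in H1.
  assert (Hp := poch_y0_neq0 (S n)).
  assert (Hn : CofNat (S n) + b <> RtoC 0).
  { replace (CofNat (S n) + b) with (b + RtoC 1 + CofNat n) by (rewrite CofNat_S; ring). apply yk_neq0. }
  assert (Hy : b + RtoC 1 <> RtoC 0).
  { replace (b + RtoC 1) with (b + RtoC 1 + CofNat 0) by (rewrite CofNat_0; ring). apply yk_neq0. }
  apply (f_equal (fun t => t / (Cpoch (b + RtoC 1) (S n) * (CofNat (S n) + b)))) in H1.
  apply (f_equal (fun t => t / (Cpoch (b + RtoC 1) (S n) * (b + RtoC 1)))) in H2.
  replace (T1 K / (CofNat (S n) + b)) with (T1 K * Cpoch (b + RtoC 1) (S n) / (Cpoch (b + RtoC 1) (S n) * (CofNat (S n) + b))) by (field; auto).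
  replace (T2 K / (b + RtoC 1)) with (T2 K * Cpoch (b + RtoC 1) (S n) / (Cpoch (b + RtoC 1) (S n) * (b + RtoC 1))) by (field; auto).
  rewrite H1, H2. field. auto.
Qed.

End Core.


Open Scope C_scope.

Definition g1 (n : nat) (a b : Cx) (j i : nat) : Cx :=
  Cbinom (CofNat (S n) + a) i / Cbinom (CofNat n + b) j.
Definition g2 (a b : Cx) (k j : nat) : Cx :=
  Cbinom (CofNat k + a) j / Cbinom (CofNat (S k) + b) k.

Lemma transform_g1 (n : nat) (a b : Cx) (K : nat) :
  Csum (S n) (fun m => Xc (S n) (g1 n a b) m * Cbinom (CofNat K) m) = T1 n a b K.
Proof.
  rewrite transform. unfold T1. apply Csum_ext. intros j Hj.
  rewrite <- vandermonde. unfold g1, Cdiv. rewrite Cx_ring.(Rmul_comm).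
  rewrite <- Csum_scal. apply Csum_ext. intros; ring.
Qed.

Lemma transform_g2 (n : nat) (a b : Cx) (K : nat) :
  Csum (S n) (fun m => Xc (S n) (g2 a b) m * Cbinom (CofNat K) m) = T2 n a b K.
Proof.
  rewrite transform. unfold T2. apply Csum_ext. intros j Hj.
  rewrite <- vandermonde. unfold g2, Cdiv. rewrite Cx_ring.(Rmul_comm).
  rewrite <- Csum_scal. apply Csum_ext. intros; ring.
Qed.

Lemma Sdouble_poly (n : nat) (a b c : Cx) : c <> RtoC 0 ->
  Sdouble n a b c = Csum (S n) (fun m => Xc (S n) (g1 n a b) m * (RtoC 1 / c) ^ m).
Proof. intros Hc. unfold Sdouble. rewrite <- double_to_poly by auto. reflexivity. Qed.

Lemma part_i (n : nat) (a b c : Cx) (Hb : forall k : nat, b <> - CofNat (S k)) :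
  c <> RtoC 0 ->
     Sdouble n a b c / (CofNat (S n) + b)
     = Csum (S n) (fun k => Csum (S k) (fun j =>
         (Cbinom (CofNat k + a) j / Cbinom (CofNat (S k) + b) k)
         * (c ^ j / c ^ k))) / (b + RtoC 1).
Proof.
  intros Hc.
  assert (Hn : CofNat (S n) + b <> RtoC 0).
  { replace (CofNat (S n) + b) with (b + RtoC 1 + CofNat n) by (rewrite CofNat_S; ring). apply yk_neq0; auto. }
  assert (Hy : b + RtoC 1 <> RtoC 0).
  { replace (b + RtoC 1) with (b + RtoC 1 + CofNat 0) by (rewrite CofNat_0; ring). apply yk_neq0; auto. }
  rewrite Sdouble_poly by auto.
  change (fun k => Csum (S k) (fun j => (Cbinom (CofNat k + a) j / Cbinom (CofNat (S k) + b) k) * (c ^ j / c ^ k)))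
    with (fun k => Csum (S k) (fun j => g2 a b k j * (c ^ j / c ^ k))).
  rewrite double_to_poly by auto.
  set (D := fun m => Xc (S n) (g1 n a b) m / (CofNat (S n) + b) - Xc (S n) (g2 a b) m / (b + RtoC 1)).
  assert (HD : forall m, (m < S n)%nat -> D m = RtoC 0).
  { apply binom_inversion. intros K HK. unfold D.
    rewrite (Csum_ext _ _ (fun m => (RtoC 1 / (CofNat (S n) + b)) * (Xc (S n) (g1 n a b) m * Cbinom (CofNat K) m)
                                  - (RtoC 1 / (b + RtoC 1)) * (Xc (S n) (g2 a b) m * Cbinom (CofNat K) m))).
    2:{ intros; field; auto. }
    rewrite Csum_sub, !Csum_scal, transform_g1, transform_g2.
    assert (E := Core n a b Hb K). 
    replace (RtoC 1 / (CofNat (S n) + b) * T1 n a b K) with (T1 n a b K / (CofNat (S n) + b)) by (field; auto).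
    rewrite E. field. auto. }
  unfold Cdiv at 1 3. rewrite !(Cx_ring.(Rmul_comm) _ (Cinv _)).
  rewrite <- !Csum_scal. apply Csum_ext. intros m Hm.
  specialize (HD m Hm). unfold D in HD.
  assert (E : Xc (S n) (g1 n a b) m / (CofNat (S n) + b) = Xc (S n) (g2 a b) m / (b + RtoC 1)).
  { replace (Xc (S n) (g1 n a b) m / (CofNat (S n) + b)) with
      (Xc (S n) (g1 n a b) m / (CofNat (S n) + b) - Xc (S n) (g2 a b) m / (b + RtoC 1) + Xc (S n) (g2 a b) m / (b + RtoC 1)) by ring.
    rewrite HD. ring. }
  unfold Cdiv in E. rewrite Cx_ring.(Rmul_assoc). rewrite (Cx_ring.(Rmul_comm) (Cinv _)), E. 
  rewrite (Cx_ring.(Rmul_assoc)). f_equal. ring.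
Qed.


Open Scope C_scope.

Definition Ccv (s : nat -> Cx) (l : Cx) : Prop :=
  Un_cv (fun N => Re (s N)) (Re l) /\ Un_cv (fun N => Im (s N)) (Im l).

Lemma Ccv_series (u : nat -> Cx) (l : Cx) : Cseries_cv u l <-> Ccv (fun N => Csum N u) l.
Proof. reflexivity. Qed.

Lemma Un_cv_ext (s t : nat -> R) (l : R) : (forall N, s N = t N) -> Un_cv s l -> Un_cv t l.
Proof. intros E H eps He. destruct (H eps He) as [N HN]. exists N. intros k Hk. rewrite <- E. auto. Qed.

Lemma Un_cv_const (c : R) : Un_cv (fun _ => c) c.
Proof. intros eps He. exists 0%nat. intros. unfold Rdist. rewrite Rminus_diag, Rabs_R0. auto. Qed.

Lemma Un_cv_shift (s : nat -> R) (l : R) (p : nat) : Un_cv s l <-> Un_cv (fun N => s (N + p)%nat) l.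
Proof.
  split; intros H eps He; destruct (H eps He) as [N HN].
  - exists N. intros k Hk. apply HN. lia.
  - exists (N + p)%nat. intros k Hk. replace k with ((k - p) + p)%nat by lia. apply HN. lia.
Qed.

Lemma Ccv_ext (s t : nat -> Cx) (l : Cx) : (forall N, s N = t N) -> Ccv s l -> Ccv t l.
Proof. intros E [H1 H2]. split; eapply Un_cv_ext; eauto; intros; simpl; rewrite E; reflexivity. Qed.

Lemma Ccv_ext_ev (s t : nat -> Cx) (l : Cx) (p : nat) : (forall N, (p <= N)%nat -> s N = t N) -> Ccv s l -> Ccv t l.
Proof.
  intros E [H1 H2]. split.
  - apply (Un_cv_shift _ _ p). apply (Un_cv_shift _ _ p) in H1. eapply Un_cv_ext; eauto.
    intros; simpl; rewrite E by lia; reflexivity.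
  - apply (Un_cv_shift _ _ p). apply (Un_cv_shift _ _ p) in H2. eapply Un_cv_ext; eauto.
    intros; simpl; rewrite E by lia; reflexivity.
Qed.

Lemma Ccv_shift (s : nat -> Cx) (l : Cx) (p : nat) : Ccv s l <-> Ccv (fun N => s (N + p)%nat) l.
Proof.
  unfold Ccv. rewrite (Un_cv_shift (fun N => Re (s N)) _ p), (Un_cv_shift (fun N => Im (s N)) _ p). tauto.
Qed.

Lemma Ccv_const (c : Cx) : Ccv (fun _ => c) c.
Proof. split; apply Un_cv_const. Qed.

Lemma Ccv_add (s t : nat -> Cx) (l1 l2 : Cx) : Ccv s l1 -> Ccv t l2 -> Ccv (fun N => s N + t N) (l1 + l2).
Proof. intros [A1 A2] [B1 B2]; split; simpl; apply CV_plus; auto. Qed.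

Lemma Ccv_sub (s t : nat -> Cx) (l1 l2 : Cx) : Ccv s l1 -> Ccv t l2 -> Ccv (fun N => s N - t N) (l1 - l2).
Proof. intros [A1 A2] [B1 B2]; split; simpl; apply CV_plus; auto; apply (CV_opp _ _ ); auto. Qed.

Lemma Ccv_mul (s t : nat -> Cx) (l1 l2 : Cx) : Ccv s l1 -> Ccv t l2 -> Ccv (fun N => s N * t N) (l1 * l2).
Proof.
  intros [A1 A2] [B1 B2]; split; simpl.
  - apply CV_minus; apply CV_mult; auto.
  - apply CV_plus; apply CV_mult; auto.
Qed.

Lemma Ccv_unique (s : nat -> Cx) (l1 l2 : Cx) : Ccv s l1 -> Ccv s l2 -> l1 = l2.
Proof. intros [A1 A2] [B1 B2]. apply Cx_ext; eapply UL_sequence; eauto. Qed.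

Lemma Cnorm_Re (z : Cx) : (Rabs (Re z) <= Cnorm z)%R.
Proof.
  unfold Cnorm. rewrite <- sqrt_Rsqr_abs. apply sqrt_le_1.
  apply Rle_0_sqr. pose proof (Rle_0_sqr (Re z)); pose proof (Rle_0_sqr (Im z)); unfold Rsqr in *; lra.
  pose proof (Rle_0_sqr (Im z)); unfold Rsqr in *; lra.
Qed.
Lemma Cnorm_Im (z : Cx) : (Rabs (Im z) <= Cnorm z)%R.
Proof.
  unfold Cnorm. rewrite <- sqrt_Rsqr_abs. apply sqrt_le_1.
  apply Rle_0_sqr. pose proof (Rle_0_sqr (Re z)); pose proof (Rle_0_sqr (Im z)); unfold Rsqr in *; lra.
  pose proof (Rle_0_sqr (Re z)); unfold Rsqr in *; lra.
Qed.
Lemma Cnorm_ge0 (z : Cx) : (0 <= Cnorm z)%R.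
Proof. unfold Cnorm. apply sqrt_pos. Qed.
Lemma Cnorm_mul (z w : Cx) : Cnorm (z * w) = (Cnorm z * Cnorm w)%R.
Proof.
  unfold Cnorm. rewrite <- sqrt_mult.
  f_equal. simpl. ring.
  pose proof (Rle_0_sqr (Re z)); pose proof (Rle_0_sqr (Im z)); unfold Rsqr in *; lra.
  pose proof (Rle_0_sqr (Re w)); pose proof (Rle_0_sqr (Im w)); unfold Rsqr in *; lra.
Qed.
Lemma Cnorm_pow (z : Cx) (k : nat) : Cnorm (z ^ k) = (Cnorm z ^ k)%R.
Proof.
  induction k; simpl. unfold Cnorm; simpl. replace (1 * 1 + 0 * 0)%R with 1%R by ring. apply sqrt_1.
  rewrite Cnorm_mul, IHk. ring.
Qed.
Lemma Cnorm_RtoC (x : R) : Cnorm (RtoC x) = Rabs x.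
Proof. unfold Cnorm; simpl. rewrite <- sqrt_Rsqr_abs. f_equal. unfold Rsqr. ring. Qed.

Lemma Ccv_norm0 (s : nat -> Cx) : Un_cv (fun N => Cnorm (s N)) 0%R -> Ccv s (RtoC 0).
Proof.
  intros H. split; intros eps He; destruct (H eps He) as [N HN]; exists N; intros k Hk;
  specialize (HN k Hk); unfold Rdist in *; simpl; rewrite Rminus_0_r in *;
  rewrite Rabs_pos_eq in HN by apply Cnorm_ge0.
  - eapply Rle_lt_trans. apply Cnorm_Re. auto.
  - eapply Rle_lt_trans. apply Cnorm_Im. auto.
Qed.

Lemma Un_cv_pow0 (r : R) : (0 <= r < 1)%R -> Un_cv (fun N => r ^ N)%R 0%R.
Proof.
  intros Hr eps He. destruct (pow_lt_1_zero r) with eps as [N HN]; auto.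
  rewrite Rabs_pos_eq; lra. exists N. intros k Hk. unfold Rdist. rewrite Rminus_0_r. auto.
Qed.

Lemma Ccv_pow0 (z : Cx) : (Cnorm z < 1)%R -> Ccv (fun N => z ^ N) (RtoC 0).
Proof.
  intros Hz. apply Ccv_norm0. eapply Un_cv_ext. intros N. symmetry. apply Cnorm_pow.
  apply Un_cv_pow0. split; auto. apply Cnorm_ge0.
Qed.

Lemma Ccv_value (u : nat -> Cx) (l : Cx) : Cseries_cv u l -> Cseries_value u = l.
Proof.
  intros H. unfold Cseries_value.
  assert (E : exists l, Cseries_cv u l) by eauto.
  destruct (epsilon_spec (inhabits (RtoC 0)) (fun l => Cseries_cv u l) E) as [H1 H2].
  apply Ccv_unique with (fun N => Csum N u). exact (conj H1 H2). exact H.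
Qed.

Lemma Cser_add (u v : nat -> Cx) (l1 l2 : Cx) : Cseries_cv u l1 -> Cseries_cv v l2 ->
  Cseries_cv (fun k => u k + v k) (l1 + l2).
Proof.
  intros H1 H2. apply Ccv_series. eapply Ccv_ext. intros N; symmetry; apply Csum_add.
  apply Ccv_add; auto.
Qed.
Lemma Cser_sub (u v : nat -> Cx) (l1 l2 : Cx) : Cseries_cv u l1 -> Cseries_cv v l2 ->
  Cseries_cv (fun k => u k - v k) (l1 - l2).
Proof.
  intros H1 H2. apply Ccv_series. eapply Ccv_ext. intros N; symmetry; apply Csum_sub.
  apply Ccv_sub; auto.
Qed.
Lemma Cser_scal (c : Cx) (u : nat -> Cx) (l : Cx) : Cseries_cv u l ->
  Cseries_cv (fun k => c * u k) (c * l).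
Proof.
  intros H. apply Ccv_series. eapply Ccv_ext. intros N; symmetry; apply Csum_scal.
  apply Ccv_mul; auto. apply Ccv_const.
Qed.
Lemma Cser_ext (u v : nat -> Cx) (l : Cx) : (forall k, u k = v k) -> Cseries_cv u l -> Cseries_cv v l.
Proof.
  intros E H. apply Ccv_series. eapply Ccv_ext. intros N. apply Csum_ext. intros; apply E. exact H.
Qed.
Lemma Cser_finsum (M : nat) (u : nat -> nat -> Cx) (l : nat -> Cx) :
  (forall m, (m < M)%nat -> Cseries_cv (u m) (l m)) ->
  Cseries_cv (fun k => Csum M (fun m => u m k)) (Csum M l).
Proof.
  induction M; intros H.
  - simpl. eapply Cser_ext with (fun _ => RtoC 0). reflexivity.
    apply Ccv_series. eapply Ccv_ext. intros N. symmetry; apply Csum_zero; auto. apply Ccv_const.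
  - simpl. apply Cser_add. apply IHM. intros; apply H; lia. apply H; lia.
Qed.
Lemma Cser_shift (u : nat -> Cx) (l : Cx) (p : nat) :
  Cseries_cv u l <-> Cseries_cv (fun k => u (p + k)%nat) (l - Csum p u).
Proof.
  split; intros H.
  - apply Ccv_series. apply Ccv_series in H.
    apply (Ccv_shift _ _ p) in H.
    eapply Ccv_ext. 2:{ apply Ccv_sub. exact H. apply Ccv_const. }
    intros N. simpl. rewrite Nat.add_comm, Csum_split. ring.
  - apply Ccv_series. apply Ccv_series in H. apply (Ccv_shift _ _ p).
    replace l with ((l - Csum p u) + Csum p u) by ring.
    eapply Ccv_ext. 2:{ apply Ccv_add. exact H. apply (Ccv_const (Csum p u)). }
    intros N. simpl. rewrite Nat.add_comm, Csum_split. ring.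
Qed.


Open Scope C_scope.

Lemma Cinv_RtoC (x : R) : x <> 0%R -> Cinv (RtoC x) = RtoC (/ x).
Proof. intros H. apply Cx_ext; simpl; field; auto. Qed.
Lemma Cpow_RtoC (x : R) (k : nat) : (RtoC x) ^ k = RtoC (x ^ k).
Proof. induction k; simpl. reflexivity. rewrite IHk. rewrite <- RtoC_mul. f_equal; ring. Qed.

Lemma Cfall_nat_real (K m : nat) : exists f, (0 <= f)%R /\ Cfall (CofNat K) m = RtoC f.
Proof.
  induction m.
  - exists 1%R; split; [lra|reflexivity].
  - destruct IHm as [f [Hf E]].
    destruct (le_lt_dec m K) as [Hm|Hm].
    + exists (f * (INR K - INR m))%R. split.
      * apply Rmult_le_pos; auto. apply le_INR in Hm. lra.
      * simpl. rewrite E. unfold CofNat. rewrite RtoC_mul, RtoC_sub. reflexivity.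
    + exists 0%R. split. lra. apply Cfall_nat_zero. lia.
Qed.

Definition rb (K m : nat) : R := Re (Cbinom (CofNat K) m).

Lemma rb_spec (K m : nat) : (0 <= rb K m)%R /\ Cbinom (CofNat K) m = RtoC (rb K m).
Proof.
  destruct (Cfall_nat_real K m) as [f [Hf E]].
  assert (E2 : Cbinom (CofNat K) m = RtoC (f / INR (fact m))).
  { unfold Cbinom, Cdiv. rewrite E. unfold CofNat. rewrite Cinv_RtoC by apply INR_fact_neq_0.
    rewrite <- RtoC_mul. reflexivity. }
  unfold rb. rewrite E2. simpl. split; auto.
  apply Rmult_le_pos; auto. left. apply Rinv_0_lt_compat. apply INR_fact_lt_0.
Qed.

Definition sB (z : Cx) (m N : nat) : Cx := Csum N (fun K => Cbinom (CofNat K) m * z ^ K).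

Lemma sB_rec (z : Cx) (m N : nat) :
  (RtoC 1 - z) * sB z (S m) (S N) = z * sB z m N - Cbinom (CofNat N) (S m) * z ^ (S N).
Proof.
  induction N.
  - unfold sB. simpl. rewrite Cbinom_nat_zero by lia. ring.
  - unfold sB in *. change (Csum (S (S N)) (fun K => Cbinom (CofNat K) (S m) * z ^ K))
      with (Csum (S N) (fun K => Cbinom (CofNat K) (S m) * z ^ K) + Cbinom (CofNat (S N)) (S m) * z ^ (S N)).
    change (Csum (S N) (fun K => Cbinom (CofNat K) m * z ^ K))
      with (Csum N (fun K => Cbinom (CofNat K) m * z ^ K) + Cbinom (CofNat N) m * z ^ N).
    rewrite Cx_ring.(Rmul_comm), Cx_ring.(Rdistr_l).
    rewrite (Cx_ring.(Rmul_comm) _ (RtoC 1 - z)), IHN.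
    rewrite CofNat_S, Cbinom_pascal. simpl. ring.
Qed.

Lemma sB_rec0 (z : Cx) (N : nat) : (RtoC 1 - z) * sB z 0 N = RtoC 1 - z ^ N.
Proof.
  induction N. unfold sB; simpl; ring.
  unfold sB in *. change (Csum (S N) (fun K => Cbinom (CofNat K) 0 * z ^ K))
      with (Csum N (fun K => Cbinom (CofNat K) 0 * z ^ K) + Cbinom (CofNat N) 0 * z ^ N).
  rewrite Cbinom_0.
  transitivity ((RtoC 1 - z) * Csum N (fun K => Cbinom (CofNat K) 0 * z ^ K) + (RtoC 1 - z) * (RtoC 1 * z ^ N)). ring.
  rewrite IHN. simpl. ring.
Qed.

Definition sigB (r : R) (m N : nat) : R := Re (sB (RtoC r) m N).

Lemma sB_real (r : R) (m N : nat) : sB (RtoC r) m N = RtoC (sigB r m N).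
Proof.
  unfold sigB. apply Cx_ext; [reflexivity|]. change (Im (RtoC (Re (sB (RtoC r) m N)))) with 0%R.
  unfold sB. induction N. reflexivity.
  change (Im (Csum N (fun K => Cbinom (CofNat K) m * RtoC r ^ K) + Cbinom (CofNat N) m * RtoC r ^ N) = 0%R).
  destruct (rb_spec N m) as [_ E]. rewrite E, Cpow_RtoC. unfold Cadd at 1. simpl Im. rewrite IHN. simpl. ring.
Qed.

Lemma sig_S (r : R) (m N : nat) : sigB r m (S N) = (sigB r m N + rb N m * r ^ N)%R.
Proof.
  unfold sigB, sB.
  change (Re (Csum N (fun K => Cbinom (CofNat K) m * RtoC r ^ K) + Cbinom (CofNat N) m * RtoC r ^ N) = (Re (Csum N (fun K => (Cbinom (CofNat K) m * RtoC r ^ K)%Cx)) + rb N m * r ^ N)%R).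
  destruct (rb_spec N m) as [_ E]. rewrite E, Cpow_RtoC. unfold Cadd at 1. simpl Re at 1. simpl. ring.
Qed.

Lemma sig_growing (r : R) (m : nat) : (0 <= r)%R -> Un_growing (sigB r m).
Proof.
  intros Hr N. rewrite sig_S. pose proof (proj1 (rb_spec N m)).
  pose proof (pow_le r N Hr). nra.
Qed.

Lemma sig_ge0 (r : R) (m N : nat) : (0 <= r)%R -> (0 <= sigB r m N)%R.
Proof.
  intros Hr. induction N. unfold sigB, sB; simpl; lra.
  pose proof (sig_growing r m Hr N). lra.
Qed.

Lemma sig_conv (r : R) : (0 <= r < 1)%R -> forall m, { l | Un_cv (sigB r m) l }.
Proof.
  intros Hr m. induction m.
  - apply growing_cv. apply sig_growing; lra.
    exists (/ (1 - r))%R. intros x [N HN]. subst x.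
    assert (E := sB_rec0 (RtoC r) N). rewrite sB_real, Cpow_RtoC in E.
    rewrite <- RtoC_sub, <- RtoC_mul, <- RtoC_sub in E. apply RtoC_inj in E.
    pose proof (pow_le r N (proj1 Hr)).
    apply Rmult_le_reg_l with (1 - r)%R. lra. rewrite Rinv_r by lra. lra.
  - destruct IHm as [l Hl].
    apply growing_cv. apply sig_growing; lra.
    assert (Hl0 : (0 <= l)%R).
    { apply Rle_trans with (sigB r m 0). apply sig_ge0; lra. apply growing_ineq; auto. apply sig_growing; lra. }
    exists (r * l / (1 - r))%R. intros x [N HN]. subst x.
    destruct N. unfold sigB, sB; simpl. apply Rmult_le_pos. nra. left; apply Rinv_0_lt_compat; lra.
    assert (E := sB_rec (RtoC r) m N). rewrite !sB_real, Cpow_RtoC in E.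
    destruct (rb_spec N (S m)) as [Hrb Erb]. rewrite Erb in E.
    rewrite <- RtoC_sub, <- RtoC_mul, <- RtoC_mul, <- RtoC_mul, <- RtoC_sub in E. apply RtoC_inj in E.
    pose proof (pow_le r (S N) (proj1 Hr)).
    assert (sigB r m N <= l)%R by (apply growing_ineq; auto; apply sig_growing; lra).
    apply Rmult_le_reg_l with (1 - r)%R. lra.
    replace ((1 - r) * (r * l / (1 - r)))%R with (r * l)%R by (field; lra).
    rewrite E. assert (0 <= rb N (S m) * r ^ S N)%R by (apply Rmult_le_pos; auto).
    nra.
Qed.

Lemma rb_term0 (r : R) (m : nat) : (0 <= r < 1)%R -> Un_cv (fun N => rb N m * r ^ N)%R 0%R.
Proof.
  intros Hr. destruct (sig_conv r Hr m) as [l Hl].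
  apply Un_cv_ext with (fun N => sigB r m (S N) - sigB r m N)%R.
  intros N. rewrite sig_S. ring.
  replace 0%R with (l - l)%R by ring. apply CV_minus; auto.
  apply Un_cv_ext with (fun N => sigB r m (N + 1)%nat). intros; f_equal; lia.
  apply (proj1 (Un_cv_shift _ _ 1) Hl).
Qed.

Lemma Cnorm_one_sub (z : Cx) : (Cnorm z < 1)%R -> RtoC 1 - z <> RtoC 0.
Proof.
  intros Hz H. assert (z = RtoC 1) by (replace z with (RtoC 1 - (RtoC 1 - z)) by ring; rewrite H; ring).
  subst. rewrite Cnorm_RtoC, Rabs_R1 in Hz. lra.
Qed.

Lemma geomB (z : Cx) (m : nat) : (Cnorm z < 1)%R ->
  Cseries_cv (fun K => Cbinom (CofNat K) m * z ^ K) (z ^ m / (RtoC 1 - z) ^ (S m)).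
Proof.
  intros Hz. assert (H1 := Cnorm_one_sub z Hz).
  apply Ccv_series. change (Ccv (sB z m) (z ^ m / (RtoC 1 - z) ^ S m)).
  induction m.
  - eapply Ccv_ext. intros N. symmetry.
    transitivity ((RtoC 1 - z) * sB z 0 N / (RtoC 1 - z)). field; auto. rewrite sB_rec0. reflexivity.
    replace (z ^ 0 / (RtoC 1 - z) ^ 1) with ((RtoC 1 - RtoC 0) * Cinv (RtoC 1 - z)) by (simpl; field; auto).
    apply Ccv_mul. apply Ccv_sub. apply Ccv_const. apply Ccv_pow0; auto. apply Ccv_const.
  - apply (Ccv_shift _ _ 1).
    eapply Ccv_ext. intros N. rewrite Nat.add_1_r. symmetry.
    transitivity ((RtoC 1 - z) * sB z (S m) (S N) / (RtoC 1 - z)). field; auto. rewrite sB_rec. reflexivity.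
    replace (z ^ S m / (RtoC 1 - z) ^ S (S m)) with ((z * (z ^ m / (RtoC 1 - z) ^ S m) - RtoC 0) * Cinv (RtoC 1 - z)).
    2:{ simpl. field. split; auto. apply Cpow_neq0; auto. }
    apply Ccv_mul; [|apply Ccv_const]. apply Ccv_sub.
    + apply Ccv_mul. apply Ccv_const. auto.
    + apply Ccv_norm0. apply Un_cv_ext with (fun N => Cnorm z * (rb N (S m) * Cnorm z ^ N))%R.
      intros N. rewrite Cnorm_mul, Cnorm_pow. destruct (rb_spec N (S m)) as [Hrb ->].
      rewrite Cnorm_RtoC, Rabs_pos_eq by auto. simpl. ring.
      replace 0%R with (Cnorm z * 0)%R by ring. apply CV_mult. apply Un_cv_const.
      apply rb_term0. split; auto. apply Cnorm_ge0.
Qed.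


Open Scope C_scope.

Lemma Re_Csum (u : nat -> Cx) (N : nat) : Re (Csum (S N) u) = sum_f_R0 (fun k => Re (u k)) N.
Proof. induction N. simpl. ring. change (Re (Csum (S N) u + u (S N)) = (sum_f_R0 (fun k => Re (u k)) N + Re (u (S N)))%R).
  rewrite <- IHN. reflexivity. Qed.
Lemma Im_Csum (u : nat -> Cx) (N : nat) : Im (Csum (S N) u) = sum_f_R0 (fun k => Im (u k)) N.
Proof. induction N. simpl. ring. change (Im (Csum (S N) u + u (S N)) = (sum_f_R0 (fun k => Im (u k)) N + Im (u (S N)))%R).
  rewrite <- IHN. reflexivity. Qed.

Lemma real_part_conv (a : nat -> R) (f : nat -> R) :
  (forall N, f (S N) = sum_f_R0 a N) -> ex_series a -> exists l, Un_cv f l.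
Proof.
  intros E H. apply Series_correct in H. apply is_series_Reals in H.
  exists (Series a). apply (proj2 (Un_cv_shift _ _ 1)).
  eapply Un_cv_ext; [|exact H]. intros N. rewrite Nat.add_1_r, E. reflexivity.
Qed.

Lemma Cser_conv_cmp (u : nat -> Cx) (v : nat -> R) (K0 : nat) :
  (forall k, (K0 <= k)%nat -> (Cnorm (u k) <= v k)%R) -> ex_series v -> exists l, Cseries_cv u l.
Proof.
  intros Hb Hv.
  set (u' := fun k => u (K0 + k)%nat).
  assert (Hv' : ex_series (fun k => v (K0 + k)%nat)) by (apply ex_series_incr_n; exact Hv).
  assert (H1 : exists l1, Un_cv (fun N => Re (Csum N u')) l1).
  { apply real_part_conv with (fun k => Re (u' k)). intros; apply Re_Csum.
    apply (@ex_series_le R_AbsRing R_CompleteNormedModule) with (fun k => v (K0 + k)%nat); auto.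
    intros k. change (norm (Re (u' k))) with (Rabs (Re (u' k))).
    eapply Rle_trans. apply Cnorm_Re. apply Hb. lia. }
  assert (H2 : exists l2, Un_cv (fun N => Im (Csum N u')) l2).
  { apply real_part_conv with (fun k => Im (u' k)). intros; apply Im_Csum.
    apply (@ex_series_le R_AbsRing R_CompleteNormedModule) with (fun k => v (K0 + k)%nat); auto.
    intros k. change (norm (Im (u' k))) with (Rabs (Im (u' k))).
    eapply Rle_trans. apply Cnorm_Im. apply Hb. lia. }
  destruct H1 as [l1 H1], H2 as [l2 H2].
  exists (mkC l1 l2 + Csum K0 u).
  apply (Cser_shift u _ K0). replace (mkC l1 l2 + Csum K0 u - Csum K0 u) with (mkC l1 l2) by ring.
  split; auto.
Qed.


Open Scope C_scope.

Lemma Cpow_div (u w : Cx) (m : nat) : w <> RtoC 0 -> (u / w) ^ m = u ^ m / w ^ m.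
Proof.
  intros Hw. induction m; simpl. field. apply Cx_one_neq_zero.
  rewrite IHm. field. split; auto. apply Cpow_neq0; auto.
Qed.

Lemma Cnorm_inv (w : Cx) : w <> RtoC 0 -> Cnorm (RtoC 1 / w) = (/ Cnorm w)%R.
Proof.
  intros Hw. assert (E : (Cnorm w * Cnorm (RtoC 1 / w))%R = 1%R).
  { rewrite <- Cnorm_mul. replace (w * (RtoC 1 / w)) with (RtoC 1) by (field; auto).
    rewrite Cnorm_RtoC. apply Rabs_R1. }
  assert (Cnorm w <> 0%R) by (intro H; rewrite H in E; lra).
  apply Rmult_eq_reg_l with (Cnorm w); auto. rewrite E. field; auto.
Qed.

Lemma Cnorm_zero_iff (w : Cx) : w <> RtoC 0 -> (0 < Cnorm w)%R.
Proof.
  intros Hw. destruct (Cnorm_ge0 w) as [H|H]; auto. exfalso.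
  assert (E := Cnorm_inv w Hw). rewrite <- H, Rinv_0 in E.
  assert (E2 : Cnorm (w * (RtoC 1 / w)) = 0%R) by (rewrite Cnorm_mul, E; ring).
  replace (w * (RtoC 1 / w)) with (RtoC 1) in E2 by (field; auto).
  rewrite Cnorm_RtoC, Rabs_R1 in E2. lra.
Qed.

Lemma Cpow_one (m : nat) : RtoC 1 ^ m = RtoC 1.
Proof. induction m; [reflexivity | change (RtoC 1 ^ S m) with (RtoC 1 ^ m * RtoC 1); rewrite IHm; ring]. Qed.

Section Zfacts.
Variable c : Cx.
Hypothesis Hc : (1 < Cnorm (c + RtoC 1))%R.

Lemma c1_neq0 : c + RtoC 1 <> RtoC 0.
Proof. intro H. rewrite H, Cnorm_RtoC, Rabs_R0 in Hc. lra. Qed.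
Lemma c_neq0 : c <> RtoC 0.
Proof. intro H. rewrite H in Hc. replace (RtoC 0 + RtoC 1) with (RtoC 1) in Hc by ring.
  rewrite Cnorm_RtoC, Rabs_R1 in Hc. lra. Qed.
Lemma z_small : (Cnorm (RtoC 1 / (c + RtoC 1)) < 1)%R.
Proof.
  rewrite Cnorm_inv by apply c1_neq0. apply Rmult_lt_reg_l with (Cnorm (c + RtoC 1)). lra.
  rewrite Rinv_r by lra. lra.
Qed.
Lemma z_ratio (m : nat) :
  (RtoC 1 / (c + RtoC 1)) ^ m / (RtoC 1 - RtoC 1 / (c + RtoC 1)) ^ S m
  = (c + RtoC 1) / c * (RtoC 1 / c) ^ m.
Proof.
  assert (H1 := c1_neq0). assert (H0 := c_neq0).
  replace (RtoC 1 - RtoC 1 / (c + RtoC 1)) with (c / (c + RtoC 1)) by (field; auto).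
  rewrite !Cpow_div by auto. simpl (_ ^ S m).
  assert (c ^ m <> RtoC 0) by (apply Cpow_neq0; auto).
  assert ((c + RtoC 1) ^ m <> RtoC 0) by (apply Cpow_neq0; auto).
  rewrite Cpow_one. field. auto.
Qed.
End Zfacts.

Lemma Sseries (n : nat) (a b c : Cx) : (1 < Cnorm (c + RtoC 1))%R ->
  Cseries_cv (fun K => T1 n a b K * (RtoC 1 / (c + RtoC 1)) ^ K) ((c + RtoC 1) / c * Sdouble n a b c).
Proof.
  intros Hc. set (z := RtoC 1 / (c + RtoC 1)).
  rewrite Sdouble_poly by (apply c_neq0; auto).
  apply Cser_ext with (fun K => Csum (S n) (fun m => Xc (S n) (g1 n a b) m * (Cbinom (CofNat K) m * z ^ K))).
  { intros K. rewrite <- transform_g1. rewrite Cx_ring.(Rmul_comm), <- Csum_scal. apply Csum_ext. intros; ring. }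
  rewrite <- Csum_scal.
  apply Cser_ext with (fun K => Csum (S n) (fun m => Xc (S n) (g1 n a b) m * (Cbinom (CofNat K) m * z ^ K))).
  reflexivity.
  replace (Csum (S n) (fun k => (c + RtoC 1) / c * (Xc (S n) (g1 n a b) k * (RtoC 1 / c) ^ k)))
    with (Csum (S n) (fun m => Xc (S n) (g1 n a b) m * (z ^ m / (RtoC 1 - z) ^ S m))).
  2:{ apply Csum_ext. intros m Hm. unfold z. rewrite z_ratio by auto. ring. }
  apply Cser_finsum. intros m Hm. apply Cser_scal. apply geomB. apply z_small; auto.
Qed.

Lemma Cpoch_one (k : nat) : Cpoch (RtoC 1) k = CofNat (fact k).
Proof.
  induction k. reflexivity. simpl Cpoch. rewrite IHk. rewrite fact_S_C. rewrite CofNat_S. ring.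
Qed.
Lemma Cpoch_ratio (d : Cx) (k : nat) : Cpoch d k * (d + CofNat k) = d * Cpoch (d + RtoC 1) k.
Proof. rewrite <- Cpoch_cons. reflexivity. Qed.

Lemma Cnorm_sq_le (d : Cx) (k : nat) : (2 * Rabs (Re d) <= INR k)%R -> (Cnorm d <= Cnorm (d + CofNat k))%R.
Proof.
  intros H. unfold Cnorm. apply sqrt_le_1.
  pose proof (Rle_0_sqr (Re d)); pose proof (Rle_0_sqr (Im d)); unfold Rsqr in *; lra.
  pose proof (Rle_0_sqr (Re d + INR k)); pose proof (Rle_0_sqr (Im d)); unfold Rsqr in *; simpl; lra.
  simpl. pose proof (pos_INR k). 
  destruct (Rle_dec 0 (Re d)).
  - rewrite Rabs_pos_eq in H by auto. nra.
  - rewrite Rabs_left in H by lra. nra.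
Qed.

(* F21-type series: d/(d+k) z^k *)
Lemma F21_conv (d z : Cx) : (forall k, d + CofNat k <> RtoC 0) -> (Cnorm z < 1)%R ->
  exists G, Cseries_cv (fun k => d / (d + CofNat k) * z ^ k) G.
Proof.
  intros Hd Hz. destruct (INR_unbounded (2 * Rabs (Re d))) as [K0 HK0].
  apply Cser_conv_cmp with (fun k => Cnorm z ^ k)%R K0.
  - intros k Hk. rewrite Cnorm_mul, Cnorm_pow.
    assert (Cnorm (d / (d + CofNat k)) <= 1)%R.
    { unfold Cdiv. replace (Cinv (d + CofNat k)) with (RtoC 1 / (d + CofNat k)) by (field; auto).
      rewrite Cnorm_mul, Cnorm_inv by auto.
      assert (Hp := Cnorm_zero_iff _ (Hd k)).
      apply Rmult_le_reg_r with (Cnorm (d + CofNat k)); auto.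
      rewrite Rmult_assoc, Rinv_l by lra. rewrite Rmult_1_r, Rmult_1_l.
      apply Cnorm_sq_le. apply le_INR in Hk. lra. }
    pose proof (pow_le (Cnorm z) k (Cnorm_ge0 z)). nra.
  - apply ex_series_geom. rewrite Rabs_pos_eq by apply Cnorm_ge0. auto.
Qed.


Open Scope C_scope.

Lemma neq_from_sub (u v : Cx) : u - v <> RtoC 0 -> u <> v.
Proof. intros H E. apply H. rewrite E. ring. Qed.

Section PartII.
Variable (n : nat) (a b c : Cx).
Hypothesis Hb : forall k : nat, b <> - CofNat (S k).
Hypothesis Hc : (1 < Cnorm (c + RtoC 1))%R.
Hypothesis Hab : forall k : nat, a - b <> - CofNat k.
Hypothesis Ha : forall k : nat, a <> - CofNat (S k).

Let z := RtoC 1 / (c + RtoC 1).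
Let d := a - b.

Lemma d_neq (k : nat) : d + CofNat k <> RtoC 0.
Proof. intro H. apply (Hab k). unfold d in H. replace (a - b) with (a - b + CofNat k - CofNat k) by ring. rewrite H. ring. Qed.
Lemma a1_neq (k : nat) : a + RtoC 1 + CofNat k <> RtoC 0.
Proof. intro H. apply (Ha k). replace a with (a + RtoC 1 + CofNat k - CofNat (S k)) by (rewrite CofNat_S; ring). rewrite H. ring. Qed.
Lemma poch_a1_neq (i q : nat) : Cpoch (a + RtoC 1 + CofNat i) q <> RtoC 0.
Proof. apply Cpoch_neq0. intros t Ht. replace (a + RtoC 1 + CofNat i + CofNat t) with (a + RtoC 1 + CofNat (i + t)) by (rewrite CofNat_add; ring). apply a1_neq. Qed.
Lemma poch_a1_neq0 (q : nat) : Cpoch (a + RtoC 1) q <> RtoC 0.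
Proof. replace (a + RtoC 1) with (a + RtoC 1 + CofNat 0) by (rewrite CofNat_0; ring). apply poch_a1_neq. Qed.
Lemma poch_d1_neq (q : nat) : Cpoch (d + RtoC 1) q <> RtoC 0.
Proof. apply Cpoch_neq0. intros t Ht. replace (d + RtoC 1 + CofNat t) with (d + CofNat (S t)) by (rewrite CofNat_S; ring). apply d_neq. Qed.

Definition F21t (k : nat) : Cx :=
  Cpoch (RtoC 1) k * Cpoch (a - b) k * (RtoC 1 / (c + RtoC 1)) ^ k / (Cpoch (a - b + RtoC 1) k * CofNat (fact k)).
Definition F32t (k : nat) : Cx :=
  Cpoch (RtoC 1) k * Cpoch (a - b) k * Cpoch (CofNat (S (S n)) + a) k * (RtoC 1 / (c + RtoC 1)) ^ k
  / (Cpoch (a - b + RtoC 1) k * Cpoch (a + RtoC 1) k * CofNat (fact k)).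

Lemma F21t_eq (k : nat) : F21t k = d / (d + CofNat k) * z ^ k.
Proof.
  unfold F21t. fold z. fold d. rewrite Cpoch_one.
  assert (E := Cpoch_ratio d k).
  assert (Hk := d_neq k). assert (Hp := poch_d1_neq k). assert (Hf := CofNat_fact_neq0 k).
  replace (Cpoch d k) with (d * Cpoch (d + RtoC 1) k / (d + CofNat k))
    by (rewrite <- E; field; auto).
  field. auto.
Qed.

Lemma F32t_eq (k : nat) : F32t k =
  d / (d + CofNat k) * Cpoch (a + CofNat k + RtoC 1) (S n) / Cpoch (a + RtoC 1) (S n) * z ^ k.
Proof.
  unfold F32t. fold z. fold d. rewrite Cpoch_one.
  assert (E := Cpoch_ratio d k).
  assert (Hk := d_neq k). assert (Hp := poch_d1_neq k). assert (Hf := CofNat_fact_neq0 k).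
  assert (Ha1 := poch_a1_neq0 k). assert (Ha2 := poch_a1_neq0 (S n)).
  replace (Cpoch d k) with (d * Cpoch (d + RtoC 1) k / (d + CofNat k))
    by (rewrite <- E; field; auto).
  assert (E2 : Cpoch (a + RtoC 1) (S n) * Cpoch (CofNat (S (S n)) + a) k
             = Cpoch (a + RtoC 1) k * Cpoch (a + CofNat k + RtoC 1) (S n)).
  { transitivity (Cpoch (a + RtoC 1) (S n + k)).
    - rewrite Cpoch_add. f_equal. f_equal. rewrite (CofNat_S (S n)). ring.
    - rewrite Nat.add_comm, Cpoch_add. f_equal. f_equal. ring. }
  replace (Cpoch (CofNat (S (S n)) + a) k) with (Cpoch (a + RtoC 1) k * Cpoch (a + CofNat k + RtoC 1) (S n) / Cpoch (a + RtoC 1) (S n))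
    by (rewrite <- E2; field; auto).
  field. auto.
Qed.

Lemma key_ii (K : nat) :
  Cpoch (b + RtoC 1) (S n) / Cpoch (a + RtoC 1) (S n) *
    ((a - b) / (CofNat (S n) + b) * (T1 n a b K * z ^ K) + F21t K) = F32t K.
Proof.
  rewrite F21t_eq, F32t_eq.
  assert (H1 := Core1 n a b Hb K). rewrite Lform_eq_Rform in H1.
  assert (H2 := Rform_tele n (a + CofNat K + RtoC 1) (b + RtoC 1)).
  replace (a + CofNat K + RtoC 1 - (b + RtoC 1)) with (d + CofNat K) in H2 by (unfold d; ring).
  assert (Hp := poch_y0_neq0 b Hb (S n)).
  assert (Hn : CofNat (S n) + b <> RtoC 0).
  { replace (CofNat (S n) + b) with (b + RtoC 1 + CofNat n) by (rewrite CofNat_S; ring). apply yk_neq0; auto. }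
  assert (Hk := d_neq K). assert (Ha2 := poch_a1_neq0 (S n)).
  set (R0 := Rform n (a + CofNat K + RtoC 1) (b + RtoC 1)) in *.
  replace (T1 n a b K) with ((CofNat (S n) + b) * R0 / Cpoch (b + RtoC 1) (S n)) by (rewrite <- H1; field; auto).
  replace R0 with ((Cpoch (a + CofNat K + RtoC 1) (S n) - Cpoch (b + RtoC 1) (S n)) / (d + CofNat K))
    by (rewrite <- H2; field; auto).
  fold d. field. auto.
Qed.

Lemma part_ii :
     ((a - b) * (c + RtoC 1)) / ((CofNat (S n) + b) * c) * Sdouble n a b c
     = Cpoch (a + RtoC 1) (S n) / Cpoch (b + RtoC 1) (S n)
         * F32 (RtoC 1) (a - b) (CofNat (S (S n)) + a) (a - b + RtoC 1) (a + RtoC 1)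
               (RtoC 1 / (c + RtoC 1))
       - F21 (RtoC 1) (a - b) (a - b + RtoC 1) (RtoC 1 / (c + RtoC 1)).
Proof.
  destruct (F21_conv d z d_neq (z_small c Hc)) as [G HG].
  assert (HG' : Cseries_cv F21t G) by (eapply Cser_ext; [|exact HG]; intros; rewrite F21t_eq; reflexivity).
  assert (HS := Sseries n a b c Hc). fold z in HS.
  set (Lh := (a - b) / (CofNat (S n) + b) * ((c + RtoC 1) / c * Sdouble n a b c)).
  assert (H3 : Cseries_cv F32t (Cpoch (b + RtoC 1) (S n) / Cpoch (a + RtoC 1) (S n) * (Lh + G))).
  { eapply Cser_ext. intros K. apply key_ii.
    apply Cser_scal. apply Cser_add; auto. apply Cser_scal. exact HS. }
 unfold F32, F21. fold z.
  change (fun k => Cpoch (RtoC 1) k * Cpoch (a - b) k * z ^ k / (Cpoch (a - b + RtoC 1) k * CofNat (fact k))) with F21t.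
  rewrite (Ccv_value _ _ HG'). 
  change (fun k => Cpoch (RtoC 1) k * Cpoch (a - b) k * Cpoch (CofNat (S (S n)) + a) k * z ^ k
       / (Cpoch (a - b + RtoC 1) k * Cpoch (a + RtoC 1) k * CofNat (fact k))) with F32t.
  rewrite (Ccv_value _ _ H3). unfold Lh.
  assert (Hp := poch_y0_neq0 b Hb (S n)). assert (Ha2 := poch_a1_neq0 (S n)).
  assert (Hn : CofNat (S n) + b <> RtoC 0).
  { replace (CofNat (S n) + b) with (b + RtoC 1 + CofNat n) by (rewrite CofNat_S; ring). apply yk_neq0; auto. }
  assert (H0 := c_neq0 c Hc).
  field. auto.
Qed.
End PartII.


Open Scope C_scope.
Open Scope R_scope.

Section Log.
Variable z : Cx.
Hypothesis Hz : Cnorm z < 1.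
Let p := Re z.
Let q := Im z.
Let r := Cnorm z.

Definition aR (j : nat) : R := match j with O => 0 | S k => Re (z ^ S k)%Cx / INR (S k) end.
Definition aI (j : nat) : R := match j with O => 0 | S k => Im (z ^ S k)%Cx / INR (S k) end.

Lemma r_ge0 : 0 <= r.
Proof. apply Cnorm_ge0. Qed.

Lemma aR_bound (j : nat) : Rabs (aR j) <= r ^ j.
Proof.
  destruct j. simpl. rewrite Rabs_R0. lra.
  unfold aR. rewrite Rabs_div by (apply not_0_INR; lia).
  rewrite (Rabs_pos_eq (INR (S j))) by apply pos_INR.
  unfold r. rewrite <- Cnorm_pow. 
  assert (1 <= INR (S j)) by (rewrite S_INR; pose proof (pos_INR j); lra).
  pose proof (Cnorm_Re (z ^ S j)%Cx). pose proof (Rabs_pos (Re (z ^ S j)%Cx)).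
  apply Rle_trans with (Rabs (Re (z ^ S j)%Cx)); auto.
  apply Rmult_le_reg_r with (INR (S j)). lra. unfold Rdiv. rewrite Rmult_assoc, Rinv_l by lra. nra.
Qed.
Lemma aI_bound (j : nat) : Rabs (aI j) <= r ^ j.
Proof.
  destruct j. simpl. rewrite Rabs_R0. lra.
  unfold aI. rewrite Rabs_div by (apply not_0_INR; lia).
  rewrite (Rabs_pos_eq (INR (S j))) by apply pos_INR.
  unfold r. rewrite <- Cnorm_pow. 
  assert (1 <= INR (S j)) by (rewrite S_INR; pose proof (pos_INR j); lra).
  pose proof (Cnorm_Im (z ^ S j)%Cx). pose proof (Rabs_pos (Im (z ^ S j)%Cx)).
  apply Rle_trans with (Rabs (Im (z ^ S j)%Cx)); auto.
  apply Rmult_le_reg_r with (INR (S j)). lra. unfold Rdiv. rewrite Rmult_assoc, Rinv_l by lra. nra.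
Qed.

Lemma pow_le_one (x : R) (n : nat) : 0 <= x <= 1 -> x ^ n <= 1.
Proof.
  intros H. induction n; simpl. lra.
  pose proof (pow_le x n (proj1 H)). apply Rle_trans with (1 * 1). apply Rmult_le_compat; lra. lra.
Qed.

Lemma radius_gt (a : nat -> R) : (forall j, Rabs (a j) <= r ^ j) ->
  forall t, Rabs t <= 1 -> Rbar_lt (Rabs t) (CV_radius a).
Proof.
  intros Ha t Ht. set (rho := 2 / (1 + r)).
  assert (Hr := r_ge0). assert (Hr1 : r < 1) by exact Hz.
  assert (Hrho : 1 < rho).
  { unfold rho. apply Rmult_lt_reg_r with (1 + r). lra. unfold Rdiv. rewrite Rmult_assoc, Rinv_l by lra. lra. }
  assert (Hrr : r * rho <= 1).
  { unfold rho. apply Rmult_le_reg_r with (1 + r). lra. unfold Rdiv.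
    replace (r * (2 * / (1 + r)) * (1 + r)) with (2 * r * ((1 + r) * / (1 + r))) by ring.
    rewrite Rinv_r by lra. lra. }
  assert (H : Rbar_le rho (CV_radius a)).
  { destruct (CV_radius_bounded a) as [Hub _]. apply Hub. exists 1. intros n0.
    rewrite Rabs_mult. apply Rle_trans with (r ^ n0 * rho ^ n0).
    apply Rmult_le_compat; auto using Rabs_pos. rewrite <- RPow_abs, Rabs_pos_eq; [lra|].
    lra.
    rewrite <- Rpow_mult_distr. apply pow_le_one. split; auto. apply Rmult_le_pos; lra. }
  destruct (CV_radius a) as [R0| |]; simpl in *; auto. lra.
Qed.

Lemma tp_bound (t : R) : Rabs t <= 1 -> 0 < 1 - t * p.
Proof.
  intros Ht. assert (Hp : Rabs p <= r) by apply Cnorm_Re.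
  assert (Rabs (t * p) <= r).
  { rewrite Rabs_mult. apply Rle_trans with (1 * Rabs p). apply Rmult_le_compat_r; auto using Rabs_pos. lra. }
  assert (r < 1) by exact Hz. pose proof (Rle_abs (t * p)). lra.
Qed.

Lemma D_pos (t : R) : Rabs t <= 1 -> 0 < (1 - t * p) ^ 2 + (t * q) ^ 2.
Proof. intros Ht. pose proof (tp_bound t Ht). pose proof (pow2_ge_0 (t * q)). nra. Qed.

Lemma tz_small (t : R) : Rabs t <= 1 -> Cnorm (RtoC t * z) < 1.
Proof.
  intros Ht. rewrite Cnorm_mul, Cnorm_RtoC. assert (r < 1) by exact Hz. pose proof r_ge0.
  apply Rle_lt_trans with (1 * r). apply Rmult_le_compat_r; auto. unfold r in *. lra.
Qed.

Lemma geom_re_im (t : R) : Rabs t <= 1 ->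
  Cseries_cv (fun K => RtoC (t ^ K) * z ^ S K)%Cx (z * Cinv (RtoC 1 - RtoC t * z))%Cx.
Proof.
  intros Ht. assert (Hw := tz_small t Ht). assert (H1 := Cnorm_one_sub _ Hw).
  assert (G := Cser_scal z _ _ (geomB (RtoC t * z) 0 Hw)).
  eapply Cser_ext; [| replace (z * Cinv (RtoC 1 - RtoC t * z))%Cx with
       (z * ((RtoC t * z) ^ 0 / (RtoC 1 - RtoC t * z) ^ 1))%Cx; [exact G|] ].
  - intros K. simpl. rewrite Cbinom_0, Cpow_mul, Cpow_RtoC.
    change (z ^ S K)%Cx with (z ^ K * z)%Cx. ring.
  - simpl. field. auto.
Qed.

Lemma Re_scal (x : R) (w : Cx) : Re (RtoC x * w)%Cx = x * Re w.
Proof. simpl. ring. Qed.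
Lemma Im_scal (x : R) (w : Cx) : Im (RtoC x * w)%Cx = x * Im w.
Proof. simpl. ring. Qed.

Lemma series_from_C (b : nat -> R) (f : nat -> Cx) (proj : Cx -> R) (l : R) :
  (forall N, proj (Csum (S N) f) = sum_f_R0 b N) ->
  Un_cv (fun N => proj (Csum N f)) l -> Series b = l.
Proof.
  intros E H. apply is_series_unique. apply is_series_Reals.
  apply (proj1 (Un_cv_shift _ _ 1)) in H. eapply Un_cv_ext; [|exact H].
  intros N. simpl. rewrite Nat.add_1_r. apply E.
Qed.

Lemma derivR_val (t : R) : Rabs t <= 1 ->
  PSeries (PS_derive aR) t = (p - t * (p * p + q * q)) / ((1 - t * p) ^ 2 + (t * q) ^ 2).
Proof.
  intros Ht. assert (G := geom_re_im t Ht). destruct G as [G1 _].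
  unfold PSeries. erewrite series_from_C; [ | | exact G1].
  - assert (HD := D_pos t Ht). simpl. unfold p, q. field.
    simpl in HD. unfold p, q in HD. nra.
  - intros N. rewrite Re_Csum. apply sum_eq. intros i _. rewrite Re_scal.
    unfold PS_derive, aR. field_simplify. reflexivity. apply not_0_INR; lia.
Qed.

Lemma derivI_val (t : R) : Rabs t <= 1 ->
  PSeries (PS_derive aI) t = q / ((1 - t * p) ^ 2 + (t * q) ^ 2).
Proof.
  intros Ht. assert (G := geom_re_im t Ht). destruct G as [_ G2].
  unfold PSeries. erewrite series_from_C; [ | | exact G2].
  - assert (HD := D_pos t Ht). simpl. unfold p, q. field.
    simpl in HD. unfold p, q in HD. nra.
  - intros N. rewrite Im_Csum. apply sum_eq. intros i _. rewrite Im_scal.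
    unfold PS_derive, aI. field_simplify. reflexivity. apply not_0_INR; lia.
Qed.


Lemma cont_of_derive (f : R -> R) (x l : R) : is_derive f x l -> continuity_pt f x.
Proof.
  intros H. apply continuity_pt_filterlim. apply (ex_derive_continuous f x). exists l; exact H.
Qed.

Lemma const_of_deriv0 (f : R -> R) : (forall t, Rabs t <= 1 -> is_derive f t 0) -> f 1 = f 0.
Proof.
  intros H. destruct (MVT_gen f 0 1 (fun _ => 0)) as [c0 [_ Hc0]].
  - intros x Hx. rewrite Rmin_left in Hx by lra. rewrite Rmax_right in Hx by lra.
    apply H. rewrite Rabs_pos_eq; lra.
  - intros x Hx. rewrite Rmin_left in Hx by lra. rewrite Rmax_right in Hx by lra.
    apply cont_of_derive with 0. apply H. rewrite Rabs_pos_eq; lra.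
  - lra.
Qed.

Lemma PSR_value : PSeries aR 1 = - (ln ((1 - 1 * p) ^ 2 + (1 * q) ^ 2) / 2).
Proof.
  set (h := fun t => PSeries aR t + ln ((1 - t * p) ^ 2 + (t * q) ^ 2) / 2).
  assert (E : h 1 = h 0).
  { apply const_of_deriv0. intros t Ht.
    assert (HD := D_pos t Ht).
    assert (H1 := is_derive_PSeries aR t (radius_gt aR aR_bound t Ht)).
    rewrite derivR_val in H1 by auto.
    assert (H2 : is_derive (fun t => ln ((1 - t * p) ^ 2 + (t * q) ^ 2) / 2) t
                   (- ((p - t * (p * p + q * q)) / ((1 - t * p) ^ 2 + (t * q) ^ 2)))).
    { simpl in HD. auto_derive. nra. field. nra. }
    assert (H3 := is_derive_plus _ _ _ _ _ H1 H2).
    unfold h. replace 0 with (plus ((p - t * (p * p + q * q)) / ((1 - t * p) ^ 2 + (t * q) ^ 2))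
                   (- ((p - t * (p * p + q * q)) / ((1 - t * p) ^ 2 + (t * q) ^ 2)))).
    exact H3. unfold plus; simpl. ring. }
  unfold h in E. rewrite PSeries_0 in E. simpl (aR 0) in E.
  replace ((1 - 0 * p) ^ 2 + (0 * q) ^ 2) with 1 in E by ring. rewrite ln_1 in E. lra.
Qed.

Lemma PSI_value : PSeries aI 1 = atan (1 * q / (1 - 1 * p)).
Proof.
  set (h := fun t => PSeries aI t - atan (t * q / (1 - t * p))).
  assert (E : h 1 = h 0).
  { apply const_of_deriv0. intros t Ht.
    assert (HD := D_pos t Ht). assert (Htp := tp_bound t Ht).
    assert (H1 := is_derive_PSeries aI t (radius_gt aI aI_bound t Ht)).
    rewrite derivI_val in H1 by auto.
    assert (H2 : is_derive (fun t => - atan (t * q / (1 - t * p))) t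
                   (- (q / ((1 - t * p) ^ 2 + (t * q) ^ 2)))).
    { simpl in HD. auto_derive. lra. field. repeat split; try lra; try nra. }
    assert (H3 := is_derive_plus _ _ _ _ _ H1 H2).
    unfold h. replace 0 with (plus (q / ((1 - t * p) ^ 2 + (t * q) ^ 2))
                   (- (q / ((1 - t * p) ^ 2 + (t * q) ^ 2)))).
    exact H3. unfold plus; simpl. ring. }
  unfold h in E. rewrite PSeries_0 in E. simpl (aI 0) in E.
  replace (0 * q / (1 - 0 * p)) with 0 in E by (field; lra). rewrite atan_0 in E. lra.
Qed.


Lemma ps_partial (a : nat -> R) (f : nat -> R) :
  (forall N, f N = sum_f_R0 (fun j => a j * 1 ^ j) N) ->
  (forall j, Rabs (a j) <= r ^ j) -> Un_cv f (PSeries a 1).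
Proof.
  intros E Ha.
  assert (H1 := radius_gt a Ha 1). rewrite Rabs_R1 in H1. specialize (H1 (Rle_refl _)).
  assert (H2 := CV_disk_inside a 1). rewrite Rabs_R1 in H2. specialize (H2 H1).
  apply ex_series_Rabs in H2. apply Series_correct in H2. apply is_series_Reals in H2.
  eapply Un_cv_ext; [|exact H2]. intros N. symmetry. apply E.
Qed.

Lemma div_nat_re (w : Cx) (k : nat) : Re (w / CofNat (S k))%Cx = Re w / INR (S k).
Proof.
  unfold Cdiv, CofNat. rewrite Cinv_RtoC by (apply not_0_INR; lia). simpl. unfold Rdiv. ring.
Qed.
Lemma div_nat_im (w : Cx) (k : nat) : Im (w / CofNat (S k))%Cx = Im w / INR (S k).
Proof.
  unfold Cdiv, CofNat. rewrite Cinv_RtoC by (apply not_0_INR; lia). simpl. unfold Rdiv. ring.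
Qed.

Lemma ln_sqrt' (x : R) : 0 < x -> ln (sqrt x) = ln x / 2.
Proof.
  intros H. assert (Hs : 0 < sqrt x) by (apply sqrt_lt_R0; auto).
  rewrite <- (sqrt_sqrt x) at 2 by lra. rewrite ln_mult by auto. field.
Qed.

Lemma log_series : Cseries_cv (fun k => z ^ S k / CofNat (S k))%Cx (- Clog (RtoC 1 - z))%Cx.
Proof.
  split.
  - replace (Re (- Clog (RtoC 1 - z))%Cx) with (PSeries aR 1).
    + apply ps_partial; [|apply aR_bound]. intros N. induction N.
      * simpl. ring.
      * change (Re (Csum N (fun k => (z ^ S k / CofNat (S k))%Cx) + (z ^ S N / CofNat (S N)))%Cx
               = sum_f_R0 (fun j => aR j * 1 ^ j) N + aR (S N) * 1 ^ S N).
        transitivity (Re (Csum N (fun k => (z ^ S k / CofNat (S k))%Cx)) + Re (z ^ S N / CofNat (S N))%Cx). reflexivity.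
        rewrite IHN, div_nat_re, pow1. rewrite Rmult_1_r. reflexivity.
    + simpl Re. rewrite PSR_value. unfold Cnorm. rewrite ln_sqrt'.
      * f_equal. f_equal. f_equal. simpl. unfold p, q. ring.
      * assert (HD := D_pos 1). rewrite Rabs_R1 in HD. specialize (HD (Rle_refl _)).
        simpl. simpl in HD. unfold p, q in HD. nra.
  - replace (Im (- Clog (RtoC 1 - z))%Cx) with (PSeries aI 1).
    + apply ps_partial; [|apply aI_bound]. intros N. induction N.
      * simpl. ring.
      * change (Im (Csum N (fun k => (z ^ S k / CofNat (S k))%Cx) + (z ^ S N / CofNat (S N)))%Cx
               = sum_f_R0 (fun j => aI j * 1 ^ j) N + aI (S N) * 1 ^ S N).
        transitivity (Im (Csum N (fun k => (z ^ S k / CofNat (S k))%Cx)) + Im (z ^ S N / CofNat (S N))%Cx). reflexivity.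
        rewrite IHN, div_nat_im, pow1. rewrite Rmult_1_r. reflexivity.
    + simpl Im. rewrite PSI_value. assert (Ht := tp_bound 1). rewrite Rabs_R1 in Ht. specialize (Ht (Rle_refl _)).
      unfold Carg. simpl Re. simpl Im.
      destruct (Rlt_dec 0 (1 + - Re z)) as [Hr|Hr].
      * replace ((0 + - Im z) / (1 + - Re z)) with (- (1 * q / (1 - 1 * p))) by (unfold p, q; field; unfold p in Ht; lra).
        rewrite atan_opp. ring.
      * exfalso. unfold p in Ht. lra.
Qed.

End Log.


Open Scope C_scope.

Lemma Cnorm_Cinv (v : Cx) : v <> RtoC 0 -> Cnorm (Cinv v) = (/ Cnorm v)%R.
Proof. intros H. rewrite <- Cnorm_inv by auto. f_equal. field. auto. Qed.

Lemma Cnorm_ge_Re (v : Cx) : (Re v <= Cnorm v)%R.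
Proof. pose proof (Cnorm_Re v). pose proof (Rle_abs (Re v)). lra. Qed.

Lemma inv_lin0 (w : Cx) : Ccv (fun N => Cinv (CofNat N + w)) (RtoC 0).
Proof.
  apply Ccv_norm0. intros eps He.
  destruct (INR_unbounded (1 + / eps - Re w)) as [N1 HN1].
  exists N1. intros k Hk. unfold Rdist. rewrite Rminus_0_r, Rabs_pos_eq by apply Cnorm_ge0.
  apply le_INR in Hk.
  assert (Hre : (Re (CofNat k + w) >= 1 + / eps)%R) by (simpl; lra).
  assert (Hpos : (0 < / eps)%R) by (apply Rinv_0_lt_compat; lra).
  assert (Hn : (1 + / eps <= Cnorm (CofNat k + w))%R) by (pose proof (Cnorm_ge_Re (CofNat k + w)); lra).
  assert (Hnz : CofNat k + w <> RtoC 0).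
  { intro E. rewrite E, Cnorm_RtoC, Rabs_R0 in Hn. lra. }
  rewrite Cnorm_Cinv by auto.
  replace eps with (/ / eps)%R by (field; lra).
  apply Rinv_lt_contravar. apply Rmult_lt_0_compat; lra. lra.
Qed.

Definition vtel (k : nat) : R := (/ (INR (S k) * INR (S (S k))))%R.

Lemma vtel_series : ex_series vtel.
Proof.
  exists 1%R. apply is_series_Reals. unfold infinite_sum.
  assert (E : forall N, sum_f_R0 vtel N = (1 - / INR (S (S N)))%R).
  { intros N. induction N.
    - unfold vtel. simpl. field.
    - simpl sum_f_R0. rewrite IHN. unfold vtel.
      assert (0 < INR (S N))%R by (apply lt_0_INR; lia).
      rewrite !S_INR in *. field. repeat split; try lra. }
  assert (E2 : forall N, Re (Cinv (CofNat (S (S N)) + RtoC 0)) = (/ INR (S (S N)))%R).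
  { intros N. replace (CofNat (S (S N)) + RtoC 0) with (RtoC (INR (S (S N)))) by (unfold CofNat; ring).
    rewrite Cinv_RtoC by (apply not_0_INR; lia). reflexivity. }
  destruct (inv_lin0 (RtoC 0)) as [H1 _].
  apply (proj1 (Un_cv_shift _ _ 2)) in H1.
  intros eps He. destruct (H1 eps He) as [N HN]. exists N. intros n0 Hn0.
  rewrite E. specialize (HN n0 Hn0). unfold Rdist in *.
  replace (n0 + 2)%nat with (S (S n0)) in HN by lia. rewrite E2 in HN. simpl Re in HN.
  replace (1 - / INR (S (S n0)) - 1)%R with (- (/ INR (S (S n0)) - 0))%R by ring.
  rewrite Rabs_Ropp. exact HN.
Qed.

Lemma digamma_conv (w : Cx) : (forall k, CofNat k + w <> RtoC 0) ->
  exists l, Cseries_cv (fun k => Cinv (CofNat (S k)) - Cinv (CofNat k + w)) l.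
Proof.
  intros Hw. destruct (INR_unbounded (2 - 2 * Re w)) as [K0 HK0].
  apply Cser_conv_cmp with (fun k => 2 * Cnorm (w - RtoC 1) * vtel k)%R K0.
  - intros k Hk. apply le_INR in Hk.
    replace (Cinv (CofNat (S k)) - Cinv (CofNat k + w)) with ((w - RtoC 1) * Cinv (CofNat (S k)) * Cinv (CofNat k + w)).
    2:{ rewrite CofNat_S. field. split. auto. rewrite <- CofNat_S. apply CofNat_neq0. }
    rewrite !Cnorm_mul, !Cnorm_Cinv by (auto; apply CofNat_neq0).
    unfold CofNat at 1. rewrite Cnorm_RtoC, Rabs_pos_eq by apply pos_INR.
    assert (H1 : (INR (S (S k)) / 2 <= Cnorm (CofNat k + w))%R).
    { pose proof (Cnorm_ge_Re (CofNat k + w)). simpl Re in H. rewrite !S_INR. lra. }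
    assert (H2 : (0 < INR (S k))%R) by (apply lt_0_INR; lia).
    assert (H3 : (0 < INR (S (S k)))%R) by (apply lt_0_INR; lia).
    unfold vtel. pose proof (Cnorm_ge0 (w - RtoC 1)).
    assert (H4 : (/ Cnorm (CofNat k + w) <= 2 * / INR (S (S k)))%R).
    { replace (2 * / INR (S (S k)))%R with (/ (INR (S (S k)) / 2))%R by (field; lra).
      apply Rinv_le_contravar; lra. }
    rewrite Rinv_mult. 
    apply Rle_trans with (Cnorm (w - RtoC 1) * / INR (S k) * (2 * / INR (S (S k))))%R.
    + apply Rmult_le_compat_l; auto. apply Rmult_le_pos; auto. left; apply Rinv_0_lt_compat; auto.
    + right. ring.
  - apply (ex_series_scal_l (2 * Cnorm (w - RtoC 1))%R vtel vtel_series).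
Qed.

Lemma digamma_step (w : Cx) : (forall k, CofNat k + w <> RtoC 0) ->
  Cdigamma (w + RtoC 1) - Cdigamma w = Cinv w.
Proof.
  intros Hw.
  assert (Hw1 : forall k, CofNat k + (w + RtoC 1) <> RtoC 0).
  { intros k. replace (CofNat k + (w + RtoC 1)) with (CofNat (S k) + w) by (rewrite CofNat_S; ring). apply Hw. }
  destruct (digamma_conv w Hw) as [B HB]. destruct (digamma_conv (w + RtoC 1) Hw1) as [A HA].
  unfold Cdigamma. rewrite (Ccv_value _ _ HA), (Ccv_value _ _ HB).
  assert (HD := Cser_sub _ _ _ _ HA HB).
  assert (HT : Cseries_cv (fun k => (Cinv (CofNat (S k)) - Cinv (CofNat k + (w + RtoC 1))) - (Cinv (CofNat (S k)) - Cinv (CofNat k + w))) (Cinv w)).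
  { apply Ccv_series.
    apply Ccv_ext with (fun N => Cinv (CofNat 0 + w) - Cinv (CofNat N + w)).
    - intros N. induction N. simpl. ring.
      change (Csum (S N) ?f) with (Csum N f + f N). rewrite <- IHN.
      replace (CofNat N + (w + RtoC 1)) with (CofNat (S N) + w) by (rewrite CofNat_S; ring). ring.
    - replace (Cinv w) with (Cinv (CofNat 0 + w) - RtoC 0) by (rewrite CofNat_0; replace (RtoC 0 + w) with w by ring; ring).
      apply Ccv_sub. apply Ccv_const. apply inv_lin0. }
  assert (E := Ccv_unique _ _ _ HD HT). rewrite <- E. ring.
Qed.

Lemma digamma_diff (y : Cx) (n : nat) : (forall k, CofNat k + y <> RtoC 0) ->
  Cdigamma (y + CofNat (S n)) - Cdigamma y = Csum (S n) (fun i => RtoC 1 / (y + CofNat i)).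
Proof.
  intros Hy. induction n.
  - simpl. replace (y + CofNat 1) with (y + RtoC 1) by (unfold CofNat; simpl; apply Cx_ext; simpl; ring).
    rewrite digamma_step by auto. rewrite CofNat_0. replace (y + RtoC 0) with y by ring. field.
    intro H. apply (Hy 0%nat). rewrite CofNat_0, H. ring.
  - change (Csum (S (S n)) (fun i => RtoC 1 / (y + CofNat i)))
      with (Csum (S n) (fun i => RtoC 1 / (y + CofNat i)) + RtoC 1 / (y + CofNat (S n))).
    rewrite <- IHn.
    replace (y + CofNat (S (S n))) with ((y + CofNat (S n)) + RtoC 1) by (rewrite (CofNat_S (S n)); ring).
    assert (Hs : forall k, CofNat k + (y + CofNat (S n)) <> RtoC 0).
    { intros k. replace (CofNat k + (y + CofNat (S n))) with (CofNat (k + S n) + y) by (rewrite CofNat_add; ring). apply Hy. }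
    assert (E := digamma_step _ Hs).
    replace (Cdigamma (y + CofNat (S n) + RtoC 1) - Cdigamma y) with
      ((Cdigamma (y + CofNat (S n) + RtoC 1) - Cdigamma (y + CofNat (S n))) + (Cdigamma (y + CofNat (S n)) - Cdigamma y)) by ring.
    rewrite E. field.
    intro H. apply (Hs 0%nat). rewrite CofNat_0, H. ring.
Qed.


Open Scope C_scope.

Lemma Rform_diag (n : nat) (y : Cx) : (forall i, y + CofNat i <> RtoC 0) ->
  Rform n y y = Cpoch y (S n) * Csum (S n) (fun i => RtoC 1 / (y + CofNat i)).
Proof.
  intros Hy. unfold Rform. rewrite <- Csum_scal. apply Csum_ext. intros k Hk.
  replace (S n) with (k + S (n - k))%nat by lia.
  rewrite Cpoch_add, Cpoch_cons.
  replace (y + CofNat k + RtoC 1) with (y + CofNat (S k)) by (rewrite CofNat_S; ring).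
  field. auto.
Qed.

Lemma Cpow_cancel (w v : Cx) (p : nat) : w * v = RtoC 1 -> w ^ p * v ^ p = RtoC 1.
Proof. intros H. rewrite <- Cpow_mul, H. apply Cpow_one. Qed.

Section PartIII.
Variable (n : nat) (b c : Cx) (m0 : nat).
Hypothesis Hb : forall k : nat, b <> - CofNat (S k).
Hypothesis Hc : (1 < Cnorm (c + RtoC 1))%R.
Let a := b - CofNat m0.
Let y := b + RtoC 1.
Let z := RtoC 1 / (c + RtoC 1).
Let PY := Cpoch (b + RtoC 1) (S n).
Let Rf (K : nat) := Rform n (a + CofNat K + RtoC 1) (b + RtoC 1).
Let u (K : nat) := Rf K / PY * z ^ K.

Lemma PY_neq : PY <> RtoC 0.
Proof. apply poch_y0_neq0; auto. Qed.
Lemma nb_neq : CofNat (S n) + b <> RtoC 0.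
Proof. replace (CofNat (S n) + b) with (b + RtoC 1 + CofNat n) by (rewrite CofNat_S; ring). apply yk_neq0; auto. Qed.
Lemma y_neq (i : nat) : y + CofNat i <> RtoC 0.
Proof. apply yk_neq0; auto. Qed.
Lemma cz : (c + RtoC 1) * z = RtoC 1.
Proof. unfold z. field. apply c1_neq0; auto. Qed.

Lemma u_series : Cseries_cv u ((c + RtoC 1) / c * Sdouble n a b c / (CofNat (S n) + b)).
Proof.
  assert (H := Cser_scal (RtoC 1 / (CofNat (S n) + b)) _ _ (Sseries n a b c Hc)).
  eapply Cser_ext; [|replace ((c + RtoC 1) / c * Sdouble n a b c / (CofNat (S n) + b)) with
     (RtoC 1 / (CofNat (S n) + b) * ((c + RtoC 1) / c * Sdouble n a b c)); [exact H|]].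
  - intros K. unfold u, Rf. fold z. assert (E := Core1 n a b Hb K). rewrite Lform_eq_Rform in E.
    assert (HP := PY_neq). assert (HN := nb_neq). unfold PY in *.
    replace (T1 n a b K) with ((CofNat (S n) + b) * Rform n (a + CofNat K + RtoC 1) (b + RtoC 1) / Cpoch (b + RtoC 1) (S n))
      by (rewrite <- E; field; auto).
    field. auto.
  - field. split; [apply c_neq0; auto | apply nb_neq].
Qed.

Definition F32t3 (k : nat) : Cx :=
  Cpoch (RtoC 1) k * Cpoch (RtoC 1) k * Cpoch (CofNat (S (S (S n))) + b) k * (RtoC 1 / (c + RtoC 1)) ^ k
  / (Cpoch (RtoC 2) k * Cpoch (b + RtoC 2) k * CofNat (fact k)).

Let pre := (CofNat (S (S n)) + b) / ((b + RtoC 1) * (c + RtoC 1)).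

Lemma Cpoch_two (k : nat) : Cpoch (RtoC 2) k = CofNat (fact (S k)).
Proof.
  rewrite <- Cpoch_one. rewrite Cpoch_cons. replace (RtoC 1 + RtoC 1) with (RtoC 2) by (apply Cx_ext; simpl; ring). ring.
Qed.

Lemma F32t3_eq (k : nat) :
  pre * F32t3 k = (c + RtoC 1) ^ m0 * u (S m0 + k) + z ^ S k / CofNat (S k).
Proof.
  unfold pre, F32t3, u, Rf. fold z.
  assert (E := Rform_tele n (a + CofNat (S m0 + k) + RtoC 1) (b + RtoC 1)).
  replace (a + CofNat (S m0 + k) + RtoC 1) with (y + CofNat (S k)) in *
    by (unfold a, y; rewrite !CofNat_add, !CofNat_S; ring).
  replace (y + CofNat (S k) - (b + RtoC 1)) with (CofNat (S k)) in E by (unfold y; ring).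
  assert (HP := PY_neq). unfold PY in HP.
  assert (Hk := CofNat_neq0 k).
  replace (Rform n (y + CofNat (S k)) (b + RtoC 1)) with
    ((Cpoch (y + CofNat (S k)) (S n) - Cpoch (b + RtoC 1) (S n)) / CofNat (S k)) by (rewrite <- E; field; auto).
  rewrite Cpoch_one, Cpoch_two.
  replace (z ^ (S m0 + k)) with (z ^ m0 * z ^ S k) by (rewrite <- Cpow_add; f_equal; lia).
  assert (Hcz := Cpow_cancel (c + RtoC 1) z m0 cz).
  replace (RtoC 1 / (c + RtoC 1)) with z by reflexivity.
  assert (E1 : (CofNat (S (S n)) + b) * Cpoch (CofNat (S (S (S n))) + b) k * Cpoch y (S n)
               = Cpoch (y + CofNat (S k)) (S n) * (y * Cpoch (b + RtoC 2) k)).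
  { transitivity (Cpoch y (S n + S k)).
    - rewrite Cpoch_add. rewrite (Cpoch_cons (y + CofNat (S n)) k).
      replace (y + CofNat (S n)) with (CofNat (S (S n)) + b) by (unfold y; rewrite (CofNat_S (S n)); ring).
      replace (CofNat (S (S n)) + b + RtoC 1) with (CofNat (S (S (S n))) + b) by (rewrite (CofNat_S (S (S n))); ring).
      ring.
    - rewrite Nat.add_comm, Cpoch_add, (Cpoch_cons y k).
      replace (y + RtoC 1) with (b + RtoC 2) by (unfold y; apply Cx_ext; simpl; ring). ring. }
  assert (Hy0 : y <> RtoC 0).
  { replace y with (y + CofNat 0) by (rewrite CofNat_0; ring). apply y_neq. }
  assert (Hb2 : Cpoch (b + RtoC 2) k <> RtoC 0).
  { replace (b + RtoC 2) with (b + RtoC 1 + CofNat 1) by (unfold CofNat; simpl; apply Cx_ext; simpl; ring).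
    apply poch_y_neq0; auto. }
  assert (Hc1 := c1_neq0 c Hc).
  assert (Hf := CofNat_fact_neq0 k). assert (Hf1 := CofNat_fact_neq0 (S k)).
  assert (Hn2 : CofNat (S (S n)) + b <> RtoC 0).
  { replace (CofNat (S (S n)) + b) with (y + CofNat (S n)) by (unfold y; rewrite (CofNat_S (S n)); ring). apply y_neq. }
  assert (Hcanc : forall W t, (c + RtoC 1) ^ m0 * (W * (z ^ m0 * t)) = W * t).
  { intros W t. transitivity (W * t * ((c + RtoC 1) ^ m0 * z ^ m0)). ring. rewrite Hcz. ring. }
  rewrite Hcanc.
  replace (Cpoch (CofNat (S (S (S n))) + b) k) with
     (Cpoch (y + CofNat (S k)) (S n) * (y * Cpoch (b + RtoC 2) k)
       / ((CofNat (S (S n)) + b) * Cpoch y (S n))).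
  2:{ rewrite <- E1. field. split; auto. }
  change (z ^ S k) with (z ^ k * z). unfold z, y in *.
  unfold PY. rewrite fact_S_C. field. repeat split; auto.
Qed.

Let H := Csum (S n) (fun i => RtoC 1 / (y + CofNat i)).
Let D := Csum m0 (fun l => (c + RtoC 1) ^ (S l) / CofNat (S l)
           * (Cpoch (b + RtoC 1 - CofNat (S l)) (S n) / Cpoch (b + RtoC 1) (S n) - RtoC 1)).

Lemma head_sum : (c + RtoC 1) ^ m0 * Csum (S m0) u = H - D.
Proof.
  assert (HP := PY_neq). assert (Hcz := Cpow_cancel (c + RtoC 1) z m0 cz).
  change (Csum (S m0) u) with (Csum m0 u + u m0).
  assert (E1 : (c + RtoC 1) ^ m0 * u m0 = H).
  { unfold u, Rf. replace (a + CofNat m0 + RtoC 1) with (b + RtoC 1) by (unfold a; ring).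
    rewrite Rform_diag by (intros; apply y_neq). fold PY. unfold H, y.
    transitivity (Csum (S n) (fun i => RtoC 1 / (b + RtoC 1 + CofNat i)) * ((c + RtoC 1) ^ m0 * z ^ m0) * (PY / PY)).
    field. auto. rewrite Hcz. field. auto. }
  assert (E2 : (c + RtoC 1) ^ m0 * Csum m0 u = - D).
  { rewrite Csum_rev, <- Csum_scal. unfold D. 
    replace (- Csum m0 (fun l => (c + RtoC 1) ^ (S l) / CofNat (S l)
           * (Cpoch (b + RtoC 1 - CofNat (S l)) (S n) / Cpoch (b + RtoC 1) (S n) - RtoC 1)))
      with ((- RtoC 1) * Csum m0 (fun l => (c + RtoC 1) ^ (S l) / CofNat (S l)
           * (Cpoch (b + RtoC 1 - CofNat (S l)) (S n) / Cpoch (b + RtoC 1) (S n) - RtoC 1)))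
      by ring.
    rewrite <- Csum_scal. apply Csum_ext. intros l Hl.
    set (K := (m0 - 1 - l)%nat).
    assert (HK : m0 = (K + S l)%nat) by (unfold K; lia).
    unfold u, Rf.
    assert (Ex : a + CofNat K + RtoC 1 = b + RtoC 1 - CofNat (S l)).
    { unfold a. rewrite HK, CofNat_add. ring. }
    rewrite Ex.
    assert (E := Rform_tele n (b + RtoC 1 - CofNat (S l)) (b + RtoC 1)).
    replace (b + RtoC 1 - CofNat (S l) - (b + RtoC 1)) with (- CofNat (S l)) in E by ring.
    assert (Hk := CofNat_neq0 l).
    assert (Hk' : - CofNat (S l) <> RtoC 0).
    { intro Z. apply Hk. replace (CofNat (S l)) with (- - CofNat (S l)) by ring. rewrite Z. ring. }
    replace (Rform n (b + RtoC 1 - CofNat (S l)) (b + RtoC 1)) with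
      ((Cpoch (b + RtoC 1 - CofNat (S l)) (S n) - Cpoch (b + RtoC 1) (S n)) / (- CofNat (S l)))
      by (rewrite <- E; field; auto).
    assert (HcK := Cpow_cancel (c + RtoC 1) z K cz).
    rewrite HK, Cpow_add.
    transitivity ((Cpoch (b + RtoC 1 - CofNat (S l)) (S n) - Cpoch (b + RtoC 1) (S n)) / - CofNat (S l) / PY
                  * (c + RtoC 1) ^ S l * ((c + RtoC 1) ^ K * z ^ K)). ring.
    rewrite HcK. unfold PY. field. split; auto. }
  rewrite Cx_ring.(Rmul_comm), Cx_ring.(Rdistr_l).
  rewrite (Cx_ring.(Rmul_comm) (Csum m0 u)), (Cx_ring.(Rmul_comm) (u m0)), E1, E2. ring.
Qed.

Lemma part_iii_core :
     (c + RtoC 1) ^ (S m0) / ((CofNat (S n) + b) * c) * Sdouble n a b c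
     = (CofNat (S (S n)) + b) / ((b + RtoC 1) * (c + RtoC 1))
         * F32 (RtoC 1) (RtoC 1) (CofNat (S (S (S n))) + b) (RtoC 2) (b + RtoC 2)
               (RtoC 1 / (c + RtoC 1))
       + (Cdigamma (CofNat (S (S n)) + b) - Cdigamma (b + RtoC 1))
       + Clog (c / (c + RtoC 1))
       - Csum m0 (fun l =>
           (c + RtoC 1) ^ (S l) / CofNat (S l)
           * (Cpoch (b + RtoC 1 - CofNat (S l)) (S n) / Cpoch (b + RtoC 1) (S n)
              - RtoC 1)).
Proof.
  fold D. fold pre.
  assert (Hc1 := c1_neq0 c Hc). assert (Hc0 := c_neq0 c Hc). assert (HN := nb_neq).
  assert (Hn2 : CofNat (S (S n)) + b <> RtoC 0).
  { replace (CofNat (S (S n)) + b) with (y + CofNat (S n)) by (unfold y; rewrite (CofNat_S (S n)); ring). apply y_neq. }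
  assert (Hy0 : b + RtoC 1 <> RtoC 0).
  { replace (b + RtoC 1) with (y + CofNat 0) by (unfold y; rewrite CofNat_0; ring). apply y_neq. }
  assert (Hpre : pre <> RtoC 0).
  { intro Z. apply Hn2. 
    replace (CofNat (S (S n)) + b) with (pre * ((b + RtoC 1) * (c + RtoC 1))) by (unfold pre; field; auto).
    rewrite Z. ring. }
  replace (Cdigamma (CofNat (S (S n)) + b) - Cdigamma (b + RtoC 1)) with H.
  2:{ replace (CofNat (S (S n)) + b) with (y + CofNat (S n)) by (unfold y; rewrite (CofNat_S (S n)); ring).
      unfold H. rewrite digamma_diff. reflexivity. intros k. rewrite Cx_ring.(Radd_comm). apply y_neq. }
  replace (c / (c + RtoC 1)) with (RtoC 1 - z) by (unfold z; field; auto).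
  assert (HU := u_series).
  set (U := (c + RtoC 1) / c * Sdouble n a b c / (CofNat (S n) + b)) in *.
  assert (HL := log_series z (z_small c Hc)).
  assert (HS := proj1 (Cser_shift u U (S m0)) HU).
  assert (HF : Cseries_cv F32t3 (RtoC 1 / pre * ((c + RtoC 1) ^ m0 * (U - Csum (S m0) u) + - Clog (RtoC 1 - z)))).
  { eapply Cser_ext. 2:{ apply Cser_scal. apply Cser_add. apply Cser_scal. exact HS. exact HL. }
    intros k. cbv beta. rewrite <- F32t3_eq. field. auto. }
  unfold F32.
  change (fun k => Cpoch (RtoC 1) k * Cpoch (RtoC 1) k * Cpoch (CofNat (S (S (S n))) + b) k * (RtoC 1 / (c + RtoC 1)) ^ k
          / (Cpoch (RtoC 2) k * Cpoch (b + RtoC 2) k * CofNat (fact k))) with F32t3.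
  rewrite (Ccv_value _ _ HF).
  assert (E := head_sum).
  assert (Hm : (c + RtoC 1) ^ m0 <> RtoC 0) by (apply Cpow_neq0; auto).
  replace (Csum (S m0) u) with ((H - D) / (c + RtoC 1) ^ m0) by (rewrite <- E; field; auto).
  unfold U. change ((c + RtoC 1) ^ S m0) with ((c + RtoC 1) ^ m0 * (c + RtoC 1)).
  field. repeat split; auto.
Qed.

End PartIII.


Open Scope C_scope.

Theorem theorem2 (n : nat) (a b c : Cx)
  (Hb : forall k : nat, b <> - CofNat (S k)) :
  (* (i) *)
  (c <> RtoC 0 ->
     Sdouble n a b c / (CofNat (S n) + b)
     = Csum (S n) (fun k => Csum (S k) (fun j =>
         (Cbinom (CofNat k + a) j / Cbinom (CofNat (S k) + b) k)
         * (c ^ j / c ^ k))) / (b + RtoC 1))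
  /\
  (* (ii) *)
  ((1 < Cnorm (c + RtoC 1))%R ->
   (forall k : nat, a - b <> - CofNat k) ->
   (forall k : nat, a <> - CofNat (S k)) ->
     ((a - b) * (c + RtoC 1)) / ((CofNat (S n) + b) * c) * Sdouble n a b c
     = Cpoch (a + RtoC 1) (S n) / Cpoch (b + RtoC 1) (S n)
         * F32 (RtoC 1) (a - b) (CofNat (S (S n)) + a) (a - b + RtoC 1) (a + RtoC 1)
               (RtoC 1 / (c + RtoC 1))
       - F21 (RtoC 1) (a - b) (a - b + RtoC 1) (RtoC 1 / (c + RtoC 1)))
  /\
  (* (iii) *)
  (forall m : nat, (1 < Cnorm (c + RtoC 1))%R -> a = b - CofNat m ->
     (c + RtoC 1) ^ (S m) / ((CofNat (S n) + b) * c) * Sdouble n a b c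
     = (CofNat (S (S n)) + b) / ((b + RtoC 1) * (c + RtoC 1))
         * F32 (RtoC 1) (RtoC 1) (CofNat (S (S (S n))) + b) (RtoC 2) (b + RtoC 2)
               (RtoC 1 / (c + RtoC 1))
       + (Cdigamma (CofNat (S (S n)) + b) - Cdigamma (b + RtoC 1))
       + Clog (c / (c + RtoC 1))
       - Csum m (fun l =>
           (c + RtoC 1) ^ (S l) / CofNat (S l)
           * (Cpoch (b + RtoC 1 - CofNat (S l)) (S n) / Cpoch (b + RtoC 1) (S n)
              - RtoC 1))).
Proof.
  split; [|split].
  - apply part_i; auto.
  - intros Hc Hab Ha. apply part_ii; auto.
  - intros m Hc Ha. subst a. apply part_iii_core; auto.
Qed.
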